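(* Let $\mathbb U=\{z\in\mathbb C:|z|<1\}$, let $\psi\in H^2(\mathbb U)$ and let $\phi:\mathbb U\to\mathbb U$ be analytic with $\|\phi\|_\infty=\sup_{z\in\mathbb U}|\phi(z)|<1$. Then the weighted composition operator $T_{\psi,\phi}f=\psi\cdot(f\circ\phi)$ and the composition operator $C_\phi f=f\circ\phi$ are nuclear (trace class) on $H^2(\mathbb U)$, and \[ \|T_{\psi,\phi}\|_1\le\frac{\|\psi\|_{H^2(\mathbb U)}}{1-\|\phi\|_\infty}. \]
   Context: $H^2(\mathbb U)$ is the Hardy space of holomorphic $f$ on $\mathbb U$ with $\|f\|_{H^2(\mathbb U)}=\sup_{0\le r<1}\bigl(\frac1{2\pi}\int_0^{2\pi}|f(re^{it})|^2dt\bigr)^{1/2}<\infty$. $\|T\|_1=\mathrm{tr}(\sqrt{T^*T})$ denotes the trace norm. *)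

(* Defs.v *)
From Stdlib Require Import Reals.
From Coquelicot Require Import Coquelicot.
Open Scope R_scope.

Definition in_disk (z : C) : Prop := Cmod z < 1.

Definition holomorphic_on_disk (f : C -> C) : Prop :=
  forall z : C, in_disk z -> @ex_derive C_AbsRing C_NormedModule f z.

Definition circle_mean2 (f : C -> C) (r : R) : R :=
  / (2 * PI) * RInt (fun t => (Cmod (f (r * cos t, r * sin t)%R)) ^ 2) 0 (2 * PI).

Definition H2norm (f : C -> C) : Rbar :=
  Lub_Rbar (fun x => exists r : R, 0 <= r < 1 /\ x = sqrt (circle_mean2 f r)).

Definition in_H2 (f : C -> C) : Prop :=
  holomorphic_on_disk f /\ is_finite (H2norm f).

(** Real-valued H^2 norm (meaningful for f in H^2). *)
Definition H2n (f : C -> C) : R := real (H2norm f).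

Definition sup_disk (phi : C -> C) : Rbar :=
  Lub_Rbar (fun x => exists z : C, in_disk z /\ x = Cmod (phi z)).

Definition wcomp_op (psi phi : C -> C) (f : C -> C) : C -> C :=
  fun z => Cmult (psi z) (f (phi z)).
Definition comp_op (phi : C -> C) (f : C -> C) : C -> C :=
  fun z => f (phi z).

Definition H2_functional (L : (C -> C) -> C) : Prop :=
  (forall f g, in_H2 f -> in_H2 g ->
     L (fun z => Cplus (f z) (g z)) = Cplus (L f) (L g)) /\
  (forall (c : C) f, in_H2 f -> L (fun z => Cmult c (f z)) = Cmult c (L f)) /\
  (exists M : R, forall f, in_H2 f -> Cmod (L f) <= M * H2n f).

Definition fnorm (L : (C -> C) -> C) : Rbar :=
  Lub_Rbar (fun x => exists f, in_H2 f /\ H2n f <= 1 /\ x = Cmod (L f)).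

Fixpoint psum (a : nat -> C) (N : nat) : C :=
  match N with
  | O => RtoC 0
  | S n => Cplus (psum a n) (a n)
  end.

Definition nuclear_rep (T : (C -> C) -> (C -> C))
    (L : nat -> (C -> C) -> C) (y : nat -> C -> C) : Prop :=
  (forall n, H2_functional (L n)) /\
  (forall n, in_H2 (y n)) /\
  ex_series (fun n => real (fnorm (L n)) * H2n (y n)) /\
  (forall f, in_H2 f -> in_H2 (T f)) /\
  (forall f, in_H2 f ->
     is_lim_seq (fun N => H2n (fun z => Cminus (T f z) (psum (fun k => Cmult (L k f) (y k z)) N))) 0).

Definition nuclear (T : (C -> C) -> (C -> C)) : Prop :=
  exists L y, nuclear_rep T L y.

(** Nuclear norm = trace norm ||T||_1 (they coincide on Hilbert spaces). *)
Definition nuclear_norm (T : (C -> C) -> (C -> C)) : Rbar :=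
  Glb_Rbar (fun x => exists L y, nuclear_rep T L y /\
                       x = Series (fun n => real (fnorm (L n)) * H2n (y n))).

(* Main.v *)
Require Import Defs.
From Stdlib Require Import Reals Lra Psatz ZArith Classical ClassicalEpsilon FunctionalExtensionality.
From Coquelicot Require Import Coquelicot.
Open Scope R_scope.

Lemma norm_CR (x : C) : @norm R_AbsRing C_R_NormedModule x = Cmod x.
Proof.
  destruct x as [a b]. unfold norm; simpl. unfold prod_norm, Cmod; simpl.
  f_equal. unfold norm; simpl. unfold abs; simpl.
  rewrite !Rmult_1_r, <- !Rabs_mult, !Rabs_right; try ring; apply Rle_ge; nra.
Qed.

Lemma norm_CC (x : C) : @norm C_AbsRing C_NormedModule x = Cmod x.
Proof. reflexivity. Qed.

Lemma scal_CR (k : R) (v : C) : @scal R_Ring C_R_ModuleSpace k v = Cmult (RtoC k) v.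
Proof. destruct v; unfold scal; simpl. unfold prod_scal, Cmult; simpl. unfold scal; simpl; unfold mult; simpl. f_equal; ring. Qed.

Lemma C_deriv_eps (f : C -> C) (z l : C) :
  @is_derive C_AbsRing C_NormedModule f z l ->
  forall eps, 0 < eps -> exists delta, 0 < delta /\
    forall w, Cmod (w - z) < delta -> Cmod (f w - f z - (w - z) * l) <= eps * Cmod (w - z).
Proof.
  intros [_ H] eps Heps.
  specialize (H z (fun P HP => HP) (mkposreal eps Heps)).
  destruct H as [d Hd]. exists d. split. apply cond_pos.
  intros w Hw. specialize (Hd w Hw). simpl in Hd.
  exact Hd.
Qed.

Lemma C_deriv_of_eps (f : C -> C) (z l : C) :
  (forall eps, 0 < eps -> exists delta, 0 < delta /\
    forall w, Cmod (w - z) < delta -> Cmod (f w - f z - (w - z) * l) <= eps * Cmod (w - z)) ->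
  @is_derive C_AbsRing C_NormedModule f z l.
Proof.
  intros H. split. apply is_linear_scal_l.
  intros x Hx. apply (@is_filter_lim_locally_unique _ (AbsRing_NormedModule C_AbsRing)) in Hx. subst x.
  intros eps. destruct (H eps (cond_pos eps)) as [d [Hd Hd']].
  exists (mkposreal _ Hd). intros w Hw.
  apply Hd'. exact Hw.
Qed.

Lemma R_deriv_of_eps (g : R -> C) (t : R) (v : C) :
  (forall eps, 0 < eps -> exists delta, 0 < delta /\
    forall s, Rabs (s - t) < delta -> Cmod (g s - g t - RtoC (s - t) * v) <= eps * Rabs (s - t)) ->
  @is_derive R_AbsRing C_R_NormedModule g t v.
Proof.
  intros H. split. apply is_linear_scal_l.
  intros x Hx. apply (@is_filter_lim_locally_unique _ (AbsRing_NormedModule R_AbsRing)) in Hx. subst x.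
  intros eps. destruct (H eps (cond_pos eps)) as [d [Hd Hd']].
  exists (mkposreal _ Hd). intros s Hs. simpl in Hs.
  rewrite norm_CR. change (minus s t) with (s - t). rewrite scal_CR.
  change (@norm R_AbsRing R_NormedModule (s - t)) with (Rabs (s - t)).
  apply Hd'. exact Hs.
Qed.

Lemma C_cont_of_eps {U : UniformSpace} (g : U -> C) (t : U) :
  (forall eps, 0 < eps -> locally t (fun s => Cmod (g s - g t) < eps)) ->
  continuous g t.
Proof.
  intros H. intros P [e He]. unfold filtermap.
  destruct (H e (cond_pos e)) as [d Hd]. exists d. intros y Hy. apply He.
  apply C_NormedModule_mixin_compat1. apply Hd. exact Hy.
Qed.

Lemma C_cont_eps {U : UniformSpace} (g : U -> C) (t : U) :
  continuous g t ->
  forall eps, 0 < eps -> locally t (fun s => Cmod (g s - g t) < eps).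
Proof.
  intros H eps Heps.
  assert (Hs : 0 < eps / sqrt 2). { apply Rdiv_lt_0_compat; auto. apply sqrt_lt_R0; lra. }
  assert (H1 := H (ball (g t) (mkposreal _ Hs)) (locally_ball _ _)).
  unfold filtermap in H1. eapply filter_imp; [|exact H1]. intros s Hb.
  apply (C_NormedModule_mixin_compat2 (g t) (g s) (mkposreal _ Hs)) in Hb. simpl in Hb.
  replace eps with (sqrt 2 * (eps / sqrt 2)). exact Hb. field.
  apply Rgt_not_eq, sqrt_lt_R0; lra.
Qed.

Notation CRInt := (@RInt C_R_CompleteNormedModule).
Notation CexRInt := (@ex_RInt C_R_NormedModule).
Notation CisRInt := (@is_RInt C_R_NormedModule).

Lemma CA_deriv_eps (f : C -> C) (z l : C) :
  @is_derive C_AbsRing (AbsRing_NormedModule C_AbsRing) f z l ->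
  forall eps, 0 < eps -> exists delta, 0 < delta /\
    forall w, Cmod (w - z) < delta -> Cmod (f w - f z - (w - z) * l) <= eps * Cmod (w - z).
Proof.
  intros [_ H] eps Heps.
  specialize (H z (fun P HP => HP) (mkposreal eps Heps)).
  destruct H as [d Hd]. exists d. split. apply cond_pos.
  intros w Hw. specialize (Hd w Hw). simpl in Hd.
  exact Hd.
Qed.

Lemma CA_deriv_of_eps (f : C -> C) (z l : C) :
  (forall eps, 0 < eps -> exists delta, 0 < delta /\
    forall w, Cmod (w - z) < delta -> Cmod (f w - f z - (w - z) * l) <= eps * Cmod (w - z)) ->
  @is_derive C_AbsRing (AbsRing_NormedModule C_AbsRing) f z l.
Proof.
  intros H. split. apply is_linear_scal_l.
  intros x Hx. apply (@is_filter_lim_locally_unique _ (AbsRing_NormedModule C_AbsRing)) in Hx. subst x.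
  intros eps. destruct (H eps (cond_pos eps)) as [d [Hd Hd']].
  exists (mkposreal _ Hd). intros w Hw.
  apply Hd'. exact Hw.
Qed.

Lemma deriv_AC f z l : @is_derive C_AbsRing (AbsRing_NormedModule C_AbsRing) f z l ->
  @is_derive C_AbsRing C_NormedModule f z l.
Proof. intros H. apply C_deriv_of_eps. apply CA_deriv_eps. auto. Qed.
Lemma deriv_CA f z l : @is_derive C_AbsRing C_NormedModule f z l ->
  @is_derive C_AbsRing (AbsRing_NormedModule C_AbsRing) f z l.
Proof. intros H. apply CA_deriv_of_eps. apply C_deriv_eps. auto. Qed.

Lemma is_RInt_C_fst (f : R -> C) a b (l : C) :
  CisRInt f a b l -> is_RInt (fun t => fst (f t)) a b (fst l).
Proof. intros H. exact (@is_RInt_fct_extend_fst R_NormedModule R_NormedModule f a b l H). Qed.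
Lemma is_RInt_C_snd (f : R -> C) a b (l : C) :
  CisRInt f a b l -> is_RInt (fun t => snd (f t)) a b (snd l).
Proof. intros H. exact (@is_RInt_fct_extend_snd R_NormedModule R_NormedModule f a b l H). Qed.
Lemma is_RInt_C_pair (f : R -> C) a b (l1 l2 : R) :
  is_RInt (fun t => fst (f t)) a b l1 -> is_RInt (fun t => snd (f t)) a b l2 ->
  CisRInt f a b (l1, l2).
Proof. intros H1 H2. exact (@is_RInt_fct_extend_pair R_NormedModule R_NormedModule f a b l1 l2 H1 H2). Qed.

Lemma is_RInt_lin2 (g h : R -> R) a b lg lh p q :
  is_RInt g a b lg -> is_RInt h a b lh -> is_RInt (fun t => p * g t + q * h t) a b (p*lg + q*lh).
Proof.
  intros Hg Hh.
  apply (@is_RInt_plus R_NormedModule (fun t => scal p (g t)) (fun t => scal q (h t)) a b (scal p lg) (scal q lh));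
  apply (@is_RInt_scal R_NormedModule); auto.
Qed.

Lemma is_RInt_Cmult (f : R -> C) a b (l c : C) :
  CisRInt f a b l -> CisRInt (fun t => (c * f t)%C) a b (c * l)%C.
Proof.
  intros H. destruct c as [c1 c2]. destruct l as [l1 l2].
  apply is_RInt_C_fst in H as H1. apply is_RInt_C_snd in H as H2. simpl in H1, H2.
  unfold Cmult; simpl. apply is_RInt_C_pair; simpl.
  - replace (c1 * l1 - c2 * l2) with (c1 * l1 + (-c2) * l2) by ring.
    apply (is_RInt_ext (fun t => c1 * fst (f t) + (-c2) * snd (f t))).
    { intros; simpl; ring. }
    apply is_RInt_lin2; auto.
  - apply (is_RInt_ext (fun t => c1 * snd (f t) + c2 * fst (f t))).
    { intros; simpl; ring. }
    replace (c1 * l2 + c2 * l1) with (c1 * l2 + c2 * l1) by ring.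
    apply is_RInt_lin2; auto.
Qed.

Lemma ex_RInt_Cmult (f : R -> C) a b (c : C) :
  CexRInt f a b -> CexRInt (fun t => (c * f t)%C) a b.
Proof. intros [l H]. exists (c * l)%C. apply is_RInt_Cmult; auto. Qed.

Lemma RInt_Cmult (f : R -> C) a b (c : C) :
  CexRInt f a b ->
  CRInt (fun t => (c * f t)%C) a b = (c * CRInt f a b)%C.
Proof. intros H. apply is_RInt_unique. apply is_RInt_Cmult. apply (@RInt_correct C_R_CompleteNormedModule f a b H). Qed.

Lemma RInt_C_fst (f : R -> C) a b :
  CexRInt f a b ->
  fst (CRInt f a b) = RInt (fun t => fst (f t)) a b.
Proof. intros H. symmetry. apply is_RInt_unique. apply is_RInt_C_fst. apply (@RInt_correct C_R_CompleteNormedModule f a b H). Qed.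

Lemma Cmod_RInt_le (f : R -> C) a b :
  a <= b -> CexRInt f a b ->
  ex_RInt (fun t => Cmod (f t)) a b ->
  Cmod (CRInt f a b) <= RInt (fun t => Cmod (f t)) a b.
Proof.
  intros Hab Hf Hm. set (J := CRInt f a b).
  destruct (Req_dec (Cmod J) 0) as [E|E].
  { rewrite E. apply RInt_ge_0; auto. intros; apply Cmod_ge_0. }
  set (u := (/ RtoC (Cmod J) * Cconj J)%C).
  assert (HuJ : (u * J)%C = RtoC (Cmod J)).
  { unfold u. rewrite <- Cmult_assoc. rewrite Cmult_comm with (x := Cconj J).
    rewrite <- (Cmod2_conj J). rewrite <- RtoC_inv by auto.
    rewrite <- RtoC_mult. f_equal. field. auto. }
  assert (Hu : Cmod u = 1).
  { unfold u. rewrite Cmod_mult, Cmod_conj, <- RtoC_inv by auto. rewrite Cmod_R.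
    rewrite Rabs_right. field; auto. apply Rle_ge, Rlt_le, Rinv_0_lt_compat.
    pose proof (Cmod_ge_0 J); lra. }
  transitivity (RInt (fun t => fst (u * f t)%C) a b).
  - rewrite <- RInt_C_fst by (apply ex_RInt_Cmult; auto).
    unfold J. rewrite RInt_Cmult by auto. fold J. rewrite HuJ. simpl. lra.
  - apply RInt_le; auto.
    + apply ex_RInt_Cmult with (c := u) in Hf. destruct Hf as [l Hl].
      exists (fst l). apply is_RInt_C_fst; auto.
    + intros t _. eapply Rle_trans. apply Rle_abs. eapply Rle_trans. apply re_le_Cmod.
      rewrite Cmod_mult, Hu. lra.
Qed.

Definition ccont (g : C -> C) (z : C) := forall eps, 0 < eps -> exists delta, 0 < delta /\
  forall w, Cmod (w - z) < delta -> Cmod (g w - g z) < eps.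
Definition rcont (g : R -> C) (t : R) := forall eps, 0 < eps -> exists delta, 0 < delta /\
  forall s, Rabs (s - t) < delta -> Cmod (g s - g t) < eps.

Lemma rcont_continuous g t : rcont g t -> continuous g t.
Proof.
  intros H. apply C_cont_of_eps. intros eps Heps.
  destruct (H eps Heps) as [d [Hd H']]. exists (mkposreal d Hd). intros s Hs. apply H'. exact Hs.
Qed.

Lemma rcont_ex_RInt g a b : (forall t, Rmin a b <= t <= Rmax a b -> rcont g t) -> CexRInt g a b.
Proof. intros H. apply (@ex_RInt_continuous C_R_CompleteNormedModule). intros; apply rcont_continuous; auto. Qed.

Lemma holo_ccont g z : @ex_derive C_AbsRing C_NormedModule g z -> ccont g z.
Proof.
  intros [l Hl] eps Heps. destruct (C_deriv_eps g z l Hl 1 Rlt_0_1) as [d [Hd H]].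
  exists (Rmin d (eps / (1 + Cmod l + 1))). split.
  { apply Rmin_pos; auto. apply Rdiv_lt_0_compat; auto. pose proof (Cmod_ge_0 l); lra. }
  intros w Hw. assert (Hw1 : Cmod (w - z) < d) by (eapply Rlt_le_trans; [exact Hw| apply Rmin_l]).
  specialize (H w Hw1).
  replace (g w - g z)%C with ((g w - g z - (w - z) * l) + (w - z) * l)%C by ring.
  eapply Rle_lt_trans. apply Cmod_triangle. rewrite Cmod_mult.
  assert (Hw2 : Cmod (w - z) < eps / (1 + Cmod l + 1)) by (eapply Rlt_le_trans; [exact Hw| apply Rmin_r]).
  pose proof (Cmod_ge_0 l). pose proof (Cmod_ge_0 (w - z)).
  apply Rmult_lt_compat_r with (r := 1 + Cmod l + 1) in Hw2; [|lra].
  unfold Rdiv in Hw2. rewrite Rmult_assoc, Rinv_l, Rmult_1_r in Hw2 by lra. nra.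
Qed.

Lemma rcont_comp (g : C -> C) (gam : R -> C) t :
  rcont gam t -> ccont g (gam t) -> rcont (fun s => g (gam s)) t.
Proof.
  intros H1 H2 eps Heps. destruct (H2 eps Heps) as [d [Hd H]].
  destruct (H1 d Hd) as [d' [Hd' H']]. exists d'. split; auto.
Qed.

Lemma rcont_plus f g t : rcont f t -> rcont g t -> rcont (fun s => (f s + g s)%C) t.
Proof.
  intros H1 H2 eps Heps. destruct (H1 (eps/2)) as [d1 [Hd1 K1]]; [lra|].
  destruct (H2 (eps/2)) as [d2 [Hd2 K2]]; [lra|].
  exists (Rmin d1 d2). split. apply Rmin_pos; auto.
  intros s Hs. replace (f s + g s - (f t + g t))%C with ((f s - f t) + (g s - g t))%C by ring.
  eapply Rle_lt_trans. apply Cmod_triangle.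
  assert (A := K1 s (Rlt_le_trans _ _ _ Hs (Rmin_l _ _))).
  assert (B := K2 s (Rlt_le_trans _ _ _ Hs (Rmin_r _ _))). lra.
Qed.

Lemma rcont_const (c : C) t : rcont (fun _ => c) t.
Proof. intros eps Heps. exists 1. split. lra. intros. replace (c - c)%C with (RtoC 0) by ring. rewrite Cmod_0. auto. Qed.

Lemma rcont_opp f t : rcont f t -> rcont (fun s => (- f s)%C) t.
Proof.
  intros H eps Heps. destruct (H eps Heps) as [d [Hd K]]. exists d. split; auto.
  intros s Hs. replace (- f s - - f t)%C with (- (f s - f t))%C by ring. rewrite Cmod_opp. auto.
Qed.

Lemma rcont_minus f g t : rcont f t -> rcont g t -> rcont (fun s => (f s - g s)%C) t.
Proof. intros. apply rcont_plus; auto. apply rcont_opp; auto. Qed.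

Lemma rcont_mult f g t : rcont f t -> rcont g t -> rcont (fun s => (f s * g s)%C) t.
Proof.
  intros H1 H2 eps Heps.
  set (A := Cmod (f t)). set (B := Cmod (g t)).
  assert (HA : 0 <= A) by apply Cmod_ge_0. assert (HB : 0 <= B) by apply Cmod_ge_0.
  set (e := Rmin 1 (eps / (A + B + 1))).
  assert (He : 0 < e). { apply Rmin_pos. lra. apply Rdiv_lt_0_compat; lra. }
  assert (He1 : e <= 1) by apply Rmin_l.
  assert (He2 : e * (A + B + 1) <= eps).
  { unfold e. eapply Rle_trans. apply Rmult_le_compat_r. lra. apply Rmin_r.
    right. field. lra. }
  destruct (H1 e He) as [d1 [Hd1 K1]]. destruct (H2 e He) as [d2 [Hd2 K2]].
  exists (Rmin d1 d2). split. apply Rmin_pos; auto.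
  intros s Hs.
  assert (X := K1 s (Rlt_le_trans _ _ _ Hs (Rmin_l _ _))).
  assert (Y := K2 s (Rlt_le_trans _ _ _ Hs (Rmin_r _ _))).
  replace (f s * g s - f t * g t)%C with ((f s - f t) * (g s - g t) + (f s - f t) * g t + f t * (g s - g t))%C by ring.
  eapply Rle_lt_trans. apply Cmod_triangle. eapply Rle_lt_trans. apply Rplus_le_compat_r. apply Cmod_triangle.
  rewrite !Cmod_mult. fold A B.
  pose proof (Cmod_ge_0 (f s - f t)). pose proof (Cmod_ge_0 (g s - g t)).
  assert (P1 : Cmod (f s - f t) * Cmod (g s - g t) <= Cmod (f s - f t) * 1) by (apply Rmult_le_compat_l; lra).
  assert (Cmod (f s - f t) * B <= e * B) by (apply Rmult_le_compat_r; lra).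
  assert (A * Cmod (g s - g t) <= A * e) by (apply Rmult_le_compat_l; lra).
  lra.
Qed.

Lemma Cmod_pair_le (a b : R) : Cmod (a, b) <= Rabs a + Rabs b.
Proof.
  unfold Cmod; simpl. apply Rsqr_incr_0_var. rewrite Rsqr_sqrt.
  - unfold Rsqr. rewrite !Rmult_1_r. pose proof (Rabs_pos a). pose proof (Rabs_pos b).
    assert (Rabs a * Rabs a = a * a) by (rewrite <- Rabs_mult; apply Rabs_right; nra).
    assert (Rabs b * Rabs b = b * b) by (rewrite <- Rabs_mult; apply Rabs_right; nra). nra.
  - nra.
  - pose proof (Rabs_pos a). pose proof (Rabs_pos b). lra.
Qed.

Lemma rcont_pair (u v : R -> R) t : continuity_pt u t -> continuity_pt v t -> rcont (fun s => (u s, v s)) t.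
Proof.
  intros Hu Hv eps Heps.
  destruct (Hu (eps/2)) as [d1 [Hd1 K1]]; [lra|]. destruct (Hv (eps/2)) as [d2 [Hd2 K2]]; [lra|].
  exists (Rmin d1 d2). split. apply Rmin_pos; lra.
  intros s Hs.
  assert (X : Rabs (u s - u t) < eps / 2).
  { destruct (Req_dec s t). subst. rewrite Rminus_diag, Rabs_R0. lra.
    apply K1. split. split. exact I. auto. simpl. unfold Rdist. eapply Rlt_le_trans. exact Hs. apply Rmin_l. }
  assert (Y : Rabs (v s - v t) < eps / 2).
  { destruct (Req_dec s t). subst. rewrite Rminus_diag, Rabs_R0. lra.
    apply K2. split. split. exact I. auto. simpl. unfold Rdist. eapply Rlt_le_trans. exact Hs. apply Rmin_r. }
  unfold Cminus, Cplus, Copp; simpl. eapply Rle_lt_trans. apply Cmod_pair_le.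
  replace (u s + - u t) with (u s - u t) by ring. replace (v s + - v t) with (v s - v t) by ring. lra.
Qed.

Lemma rcont_line (p d : C) t : rcont (fun s => (p + RtoC s * d)%C) t.
Proof.
  apply rcont_plus. apply rcont_const. apply rcont_mult; [|apply rcont_const].
  apply rcont_pair. apply continuity_pt_id. apply continuity_pt_const. intros x y; reflexivity.
Qed.

Definition Irect (g : C -> C) (a b c d : R) : C :=
  (CRInt (fun x => g (x, c)) a b + Ci * CRInt (fun y => g (b, y)) c d
   - CRInt (fun x => g (x, d)) a b - Ci * CRInt (fun y => g (a, y)) c d)%C.

Definition inrect (a b c d : R) (z : C) :=
  Rmin a b <= fst z <= Rmax a b /\ Rmin c d <= snd z <= Rmax c d.

Definition rect_ok (g : C -> C) a b c d := forall z, inrect a b c d z -> ccont g z.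

Lemma hedge_int g a b y : (forall x, Rmin a b <= x <= Rmax a b -> ccont g (x, y)) ->
  CexRInt (fun x => g (x, y)) a b.
Proof.
  intros H. apply rcont_ex_RInt. intros t Ht. apply (rcont_comp g (fun x => (x, y))).
  apply rcont_pair. apply continuity_pt_id. apply continuity_pt_const. intros u v; reflexivity.
  apply H; auto.
Qed.

Lemma vedge_int g x c d : (forall y, Rmin c d <= y <= Rmax c d -> ccont g (x, y)) ->
  CexRInt (fun y => g (x, y)) c d.
Proof.
  intros H. apply rcont_ex_RInt. intros t Ht. apply (rcont_comp g (fun y => (x, y))).
  apply rcont_pair. apply continuity_pt_const. intros u v; reflexivity. apply continuity_pt_id.
  apply H; auto.
Qed.

Lemma CRInt_Chasles (f : R -> C) a b c :
  CexRInt f a b -> CexRInt f b c -> (CRInt f a b + CRInt f b c)%C = CRInt f a c.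
Proof. intros. apply (@RInt_Chasles C_R_CompleteNormedModule); auto. Qed.

Lemma CRInt_swap (f : R -> C) a b : CexRInt f a b -> CRInt f b a = (- CRInt f a b)%C.
Proof. intros H. symmetry. apply (@opp_RInt_swap C_R_CompleteNormedModule); auto. Qed.

Lemma between_l a b m : Rmin a b <= m <= Rmax a b -> forall x, Rmin a m <= x <= Rmax a m -> Rmin a b <= x <= Rmax a b.
Proof. intros [H1 H2] x [H3 H4]. unfold Rmin, Rmax in *. repeat destruct Rle_dec; lra. Qed.
Lemma between_r a b m : Rmin a b <= m <= Rmax a b -> forall x, Rmin m b <= x <= Rmax m b -> Rmin a b <= x <= Rmax a b.
Proof. intros [H1 H2] x [H3 H4]. unfold Rmin, Rmax in *. repeat destruct Rle_dec; lra. Qed.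
Lemma between_a a b : Rmin a b <= a <= Rmax a b.
Proof. unfold Rmin, Rmax; destruct Rle_dec; lra. Qed.
Lemma between_b a b : Rmin a b <= b <= Rmax a b.
Proof. unfold Rmin, Rmax; destruct Rle_dec; lra. Qed.

Lemma Irect_split_x g a b c d m : rect_ok g a b c d -> Rmin a b <= m <= Rmax a b ->
  Irect g a b c d = (Irect g a m c d + Irect g m b c d)%C.
Proof.
  intros H Hm. unfold Irect.
  assert (Hh : forall y, Rmin c d <= y <= Rmax c d -> forall a' b', (forall x, Rmin a' b' <= x <= Rmax a' b' -> Rmin a b <= x <= Rmax a b) -> CexRInt (fun x => g (x, y)) a' b').
  { intros y Hy a' b' Hab. apply hedge_int. intros x Hx. apply H. split; simpl; auto. }
  rewrite <- (CRInt_Chasles (fun x => g (x, c)) a m b), <- (CRInt_Chasles (fun x => g (x, d)) a m b).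
  - ring.
  - apply Hh. apply between_b. apply between_l; auto.
  - apply Hh. apply between_b. apply between_r; auto.
  - apply Hh. apply between_a. apply between_l; auto.
  - apply Hh. apply between_a. apply between_r; auto.
Qed.

Lemma Irect_split_y g a b c d m : rect_ok g a b c d -> Rmin c d <= m <= Rmax c d ->
  Irect g a b c d = (Irect g a b c m + Irect g a b m d)%C.
Proof.
  intros H Hm. unfold Irect.
  assert (Hv : forall x, Rmin a b <= x <= Rmax a b -> forall c' d', (forall y, Rmin c' d' <= y <= Rmax c' d' -> Rmin c d <= y <= Rmax c d) -> CexRInt (fun y => g (x, y)) c' d').
  { intros x Hx c' d' Hcd. apply vedge_int. intros y Hy. apply H. split; simpl; auto. }
  rewrite <- (CRInt_Chasles (fun y => g (b, y)) c m d), <- (CRInt_Chasles (fun y => g (a, y)) c m d).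
  - ring.
  - apply Hv. apply between_a. apply between_l; auto.
  - apply Hv. apply between_a. apply between_r; auto.
  - apply Hv. apply between_b. apply between_l; auto.
  - apply Hv. apply between_b. apply between_r; auto.
Qed.

Lemma Irect_swap_x g a b c d : rect_ok g a b c d -> Irect g b a c d = (- Irect g a b c d)%C.
Proof.
  intros H. unfold Irect.
  rewrite (CRInt_swap (fun x => g (x, c)) a b), (CRInt_swap (fun x => g (x, d)) a b). ring.
  - apply hedge_int. intros x Hx; apply H; split; simpl; auto. apply between_b.
  - apply hedge_int. intros x Hx; apply H; split; simpl; auto. apply between_a.
Qed.

Lemma Irect_swap_y g a b c d : rect_ok g a b c d -> Irect g a b d c = (- Irect g a b c d)%C.
Proof.
  intros H. unfold Irect.
  rewrite (CRInt_swap (fun y => g (b, y)) c d), (CRInt_swap (fun y => g (a, y)) c d). ring.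
  - apply vedge_int. intros y Hy; apply H; split; simpl; auto. apply between_a.
  - apply vedge_int. intros y Hy; apply H; split; simpl; auto. apply between_b.
Qed.

Lemma rect_ok_swap_x g a b c d : rect_ok g a b c d -> rect_ok g b a c d.
Proof. intros H z [H1 H2]. apply H. split; auto. rewrite Rmin_comm, Rmax_comm; auto. Qed.
Lemma rect_ok_swap_y g a b c d : rect_ok g a b c d -> rect_ok g a b d c.
Proof. intros H z [H1 H2]. apply H. split; auto. rewrite Rmin_comm, Rmax_comm; auto. Qed.

Lemma is_RInt_id_R a b : is_RInt (fun x => x) a b ((b*b - a*a)/2).
Proof.
  replace ((b*b - a*a)/2) with (minus (b*b/2) (a*a/2)) by (unfold minus, plus, opp; simpl; field).
  apply (is_RInt_derive (fun x => x*x/2) (fun x => x)).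
  - intros x _. auto_derive; auto. field.
  - intros x _. apply continuous_id.
Qed.

Lemma is_RInt_const_R a b (k : R) : is_RInt (fun _ => k) a b ((b - a) * k).
Proof. apply (@is_RInt_const R_NormedModule). Qed.

Lemma hedge_affine (al be : C) a b y :
  CisRInt (fun x => (al + be * (x, y))%C) a b
    (al * RtoC (b - a) + be * (((b*b - a*a)/2)%R, (y * (b - a))%R))%C.
Proof.
  destruct al as [a1 a2], be as [b1 b2].
  replace (((a1, a2) * RtoC (b - a) + (b1, b2) * (((b*b - a*a)/2)%R, (y * (b - a))%R))%C) with
    ((a1 * (b - a) + (b1 * ((b*b - a*a)/2) + (- b2) * (y * (b-a))), a2 * (b-a) + (b1 * (y * (b-a)) + b2 * ((b*b - a*a)/2))) : C)
    by (unfold Cplus, Cmult, RtoC; simpl; f_equal; ring).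
  apply is_RInt_C_pair; simpl.
  - apply (is_RInt_ext (fun x => 1 * a1 + 1 * (b1 * x + (-b2) * y))). intros x0 _; cbn; ring.
    replace (a1 * (b - a) + (b1 * ((b*b - a*a)/2) + (- b2) * (y * (b-a)))) with
      (1 * ((b - a) * a1) + 1 * (b1 * ((b*b - a*a)/2) + (-b2) * ((b - a) * y))) by ring.
    apply is_RInt_lin2. apply is_RInt_const_R. apply is_RInt_lin2. apply is_RInt_id_R. apply is_RInt_const_R.
  - apply (is_RInt_ext (fun x => 1 * a2 + 1 * (b2 * x + b1 * y))). intros x0 _; cbn; ring.
    replace (a2 * (b-a) + (b1 * (y * (b-a)) + b2 * ((b*b - a*a)/2))) with
      (1 * ((b - a) * a2) + 1 * (b2 * ((b*b - a*a)/2) + b1 * ((b - a) * y))) by ring.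
    apply is_RInt_lin2. apply is_RInt_const_R. apply is_RInt_lin2. apply is_RInt_id_R. apply is_RInt_const_R.
Qed.

Lemma vedge_affine (al be : C) x c d :
  CisRInt (fun y => (al + be * (x, y))%C) c d
    (al * RtoC (d - c) + be * ((x * (d - c))%R, ((d*d - c*c)/2)%R))%C.
Proof.
  destruct al as [a1 a2], be as [b1 b2].
  replace (((a1, a2) * RtoC (d - c) + (b1, b2) * ((x * (d - c))%R, ((d*d - c*c)/2)%R))%C) with
    ((a1 * (d - c) + (b1 * ((d - c) * x) + (- b2) * ((d*d - c*c)/2)), a2 * (d-c) + (b1 * ((d*d - c*c)/2) + b2 * ((d-c) * x))) : C)
    by (unfold Cplus, Cmult, RtoC; simpl; f_equal; ring).
  apply is_RInt_C_pair; simpl.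
  - apply (is_RInt_ext (fun y => 1 * a1 + 1 * (b1 * x + (-b2) * y))). intros x0 _; cbn; ring.
    replace (a1 * (d - c) + (b1 * ((d - c) * x) + (- b2) * ((d*d - c*c)/2))) with
      (1 * ((d - c) * a1) + 1 * (b1 * ((d - c) * x) + (-b2) * ((d*d - c*c)/2))) by ring.
    apply is_RInt_lin2. apply is_RInt_const_R. apply is_RInt_lin2. apply is_RInt_const_R. apply is_RInt_id_R.
  - apply (is_RInt_ext (fun y => 1 * a2 + 1 * (b1 * y + b2 * x))). intros x0 _; cbn; ring.
    replace (a2 * (d-c) + (b1 * ((d*d - c*c)/2) + b2 * ((d-c) * x))) with
      (1 * ((d - c) * a2) + 1 * (b1 * ((d*d - c*c)/2) + b2 * ((d - c) * x))) by ring.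
    apply is_RInt_lin2. apply is_RInt_const_R. apply is_RInt_lin2. apply is_RInt_id_R. apply is_RInt_const_R.
Qed.

Lemma CRInt_unique (f : R -> C) a b l : CisRInt f a b l -> CRInt f a b = l.
Proof. intros H. apply (@is_RInt_unique C_R_CompleteNormedModule); auto. Qed.

Lemma Irect_affine (al be : C) a b c d : Irect (fun z => (al + be * z)%C) a b c d = RtoC 0.
Proof.
  unfold Irect.
  rewrite (CRInt_unique _ _ _ _ (hedge_affine al be a b c)).
  rewrite (CRInt_unique _ _ _ _ (hedge_affine al be a b d)).
  rewrite (CRInt_unique _ _ _ _ (vedge_affine al be b c d)).
  rewrite (CRInt_unique _ _ _ _ (vedge_affine al be a c d)).
  destruct al as [a1 a2], be as [b1 b2]. unfold Cplus, Cminus, Cmult, Copp, Cplus, RtoC, Ci; simpl.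
  f_equal; ring.
Qed.

Lemma Irect_minus g h a b c d : rect_ok g a b c d -> rect_ok h a b c d ->
  Irect (fun z => (g z - h z)%C) a b c d = (Irect g a b c d - Irect h a b c d)%C.
Proof.
  intros Hg Hh. unfold Irect.
  assert (HH : forall f, rect_ok f a b c d -> CexRInt (fun x => f (x, c)) a b /\ CexRInt (fun x => f (x, d)) a b
     /\ CexRInt (fun y => f (a, y)) c d /\ CexRInt (fun y => f (b, y)) c d).
  { intros f Hf. repeat split.
    - apply hedge_int. intros; apply Hf; split; simpl; auto. apply between_a.
    - apply hedge_int. intros; apply Hf; split; simpl; auto. apply between_b.
    - apply vedge_int. intros; apply Hf; split; simpl; auto. apply between_a.
    - apply vedge_int. intros; apply Hf; split; simpl; auto. apply between_b. }
  destruct (HH g Hg) as [G1 [G2 [G3 G4]]]. destruct (HH h Hh) as [H1 [H2 [H3 H4]]].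
  rewrite (@RInt_minus C_R_CompleteNormedModule (fun x => g (x, c)) (fun x => h (x, c))) by auto.
  rewrite (@RInt_minus C_R_CompleteNormedModule (fun x => g (x, d)) (fun x => h (x, d))) by auto.
  rewrite (@RInt_minus C_R_CompleteNormedModule (fun y => g (a, y)) (fun y => h (a, y))) by auto.
  rewrite (@RInt_minus C_R_CompleteNormedModule (fun y => g (b, y)) (fun y => h (b, y))) by auto.
  change minus with Cminus. ring.
Qed.

Definition hol_ok (g : C -> C) a b c d := forall z, inrect a b c d z -> @ex_derive C_AbsRing C_NormedModule g z.

Lemma hol_rect_ok g a b c d : hol_ok g a b c d -> rect_ok g a b c d.
Proof. intros H z Hz. apply holo_ccont. auto. Qed.

Lemma inrect_ord a b c d z : a <= b -> c <= d -> inrect a b c d z <-> (a <= fst z <= b /\ c <= snd z <= d).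
Proof. intros. unfold inrect. rewrite Rmin_left, Rmax_right, (Rmin_left c), (Rmax_right c) by auto. tauto. Qed.

Lemma hol_ok_sub g a b c d a' b' c' d' :
  a <= a' -> a' <= b' -> b' <= b -> c <= c' -> c' <= d' -> d' <= d ->
  hol_ok g a b c d -> hol_ok g a' b' c' d'.
Proof.
  intros; intros z Hz. apply H5. rewrite inrect_ord in Hz by auto. rewrite inrect_ord by lra. lra.
Qed.

Record rect := mkR { ra : R; rb : R; rc : R; rd : R }.
Definition IR g r := Irect g (ra r) (rb r) (rc r) (rd r).

Definition good (g : C -> C) (r r' : rect) :=
  ra r <= ra r' /\ rb r' <= rb r /\ rb r' - ra r' = (rb r - ra r) / 2 /\
  rc r <= rc r' /\ rd r' <= rd r /\ rd r' - rc r' = (rd r - rc r) / 2 /\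
  Cmod (IR g r) <= 4 * Cmod (IR g r').

Lemma good_ex g r : ra r <= rb r -> rc r <= rd r -> hol_ok g (ra r) (rb r) (rc r) (rd r) ->
  exists r', good g r r'.
Proof.
  destruct r as [a b c d]; unfold IR; simpl. intros Hab Hcd H.
  set (m := (a + b) / 2). set (n := (c + d) / 2).
  assert (Hm : a <= m <= b) by (unfold m; lra). assert (Hn : c <= n <= d) by (unfold n; lra).
  assert (R1 : rect_ok g a b c d) by (apply hol_rect_ok; auto).
  assert (R2 : rect_ok g a m c d) by (apply hol_rect_ok; eapply hol_ok_sub; [| | | | | |exact H]; lra).
  assert (R3 : rect_ok g m b c d) by (apply hol_rect_ok; eapply hol_ok_sub; [| | | | | |exact H]; lra).
  assert (E : Irect g a b c d = (Irect g a m c n + Irect g a m n d + (Irect g m b c n + Irect g m b n d))%C).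
  { rewrite (Irect_split_x g a b c d m); auto.
    rewrite (Irect_split_y g a m c d n), (Irect_split_y g m b c d n); auto.
    all: unfold Rmin, Rmax; repeat destruct Rle_dec; lra. }
  assert (Hw : m - a = (b - a) / 2) by (unfold m; lra). assert (Hw' : b - m = (b - a) / 2) by (unfold m; lra).
  assert (Hh : n - c = (d - c) / 2) by (unfold n; lra). assert (Hh' : d - n = (d - c) / 2) by (unfold n; lra).
  destruct (Rle_lt_dec (Cmod (Irect g a b c d)) (4 * Cmod (Irect g a m c n))).
  { exists (mkR a m c n). unfold good, IR; simpl. repeat split; lra. }
  destruct (Rle_lt_dec (Cmod (Irect g a b c d)) (4 * Cmod (Irect g a m n d))).
  { exists (mkR a m n d). unfold good, IR; simpl. repeat split; lra. }
  destruct (Rle_lt_dec (Cmod (Irect g a b c d)) (4 * Cmod (Irect g m b c n))).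
  { exists (mkR m b c n). unfold good, IR; simpl. repeat split; lra. }
  destruct (Rle_lt_dec (Cmod (Irect g a b c d)) (4 * Cmod (Irect g m b n d))).
  { exists (mkR m b n d). unfold good, IR; simpl. repeat split; lra. }
  exfalso. rewrite E in r, r0, r1, r2.
  set (A := Irect g a m c n) in *. set (B := Irect g a m n d) in *.
  set (C' := Irect g m b c n) in *. set (D := Irect g m b n d) in *.
  assert (T : Cmod (A + B + (C' + D)) <= Cmod A + Cmod B + (Cmod C' + Cmod D)).
  { eapply Rle_trans. apply Cmod_triangle. apply Rplus_le_compat; apply Cmod_triangle. }
  lra.
Qed.

Definition pick g r := epsilon (inhabits r) (fun r' => good g r r').
Fixpoint seqR g r0 n := match n with O => r0 | S n => pick g (seqR g r0 n) end.

Lemma seqR_inv g r0 : ra r0 <= rb r0 -> rc r0 <= rd r0 -> hol_ok g (ra r0) (rb r0) (rc r0) (rd r0) ->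
  forall n, let r := seqR g r0 n in
    ra r0 <= ra r /\ ra r <= rb r /\ rb r <= rb r0 /\
    rc r0 <= rc r /\ rc r <= rd r /\ rd r <= rd r0 /\
    rb r - ra r = (rb r0 - ra r0) / 2 ^ n /\ rd r - rc r = (rd r0 - rc r0) / 2 ^ n /\
    Cmod (IR g r0) <= (2 ^ n) ^ 2 * Cmod (IR g r) /\
    good g r (seqR g r0 (S n)).
Proof.
  intros H1 H2 H3 n. induction n as [|n IH].
  - simpl. assert (G : good g r0 (pick g r0)).
    { unfold pick; apply epsilon_spec. apply good_ex; auto. }
    split; [lra|]. split; [lra|]. split; [lra|]. split; [lra|]. split; [lra|]. split; [lra|].
    split; [simpl; field|]. split; [simpl; field|]. split; [simpl; lra|]. exact G.
  - simpl in IH |- *. destruct IH as [A1 [A2 [A3 [A4 [A5 [A6 [A7 [A8 [A9 A10]]]]]]]]].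
    set (r := seqR g r0 n) in *. set (r' := pick g r) in *.
    destruct A10 as [B1 [B2 [B3 [B4 [B5 [B6 B7]]]]]].
    assert (P : 0 < 2 ^ n) by (apply pow_lt; lra).
    assert (G : good g r' (pick g r')).
    { unfold pick; apply epsilon_spec. apply good_ex; try lra.
      eapply hol_ok_sub; [| | | | | |exact H3]; lra. }
    split; [lra|]. split; [lra|]. split; [lra|]. split; [lra|]. split; [lra|]. split; [lra|].
    split. { rewrite B3, A7. field. lra. }
    split. { rewrite B6, A8. field. lra. }
    split. { pose proof (Cmod_ge_0 (IR g r')). nra. }
    exact G.
Qed.

Lemma pow2_ge_INR n : INR n <= 2 ^ n.
Proof.
  induction n. simpl; lra. rewrite S_INR. simpl. assert (1 <= 2 ^ n) by (apply pow_R1_Rle; lra). lra.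
Qed.

Lemma edge_bound (f : R -> C) a b M : a <= b -> CexRInt f a b ->
  (forall x, a <= x <= b -> Cmod (f x) <= M) -> Cmod (CRInt f a b) <= (b - a) * M.
Proof.
  intros Hab Hf HM. rewrite <- norm_CR.
  apply (@norm_RInt_le_const C_R_NormedModule f a b); auto.
  intros x Hx. rewrite norm_CR. auto. apply (@RInt_correct C_R_CompleteNormedModule); auto.
Qed.

Lemma Irect_bound g a b c d M : a <= b -> c <= d -> rect_ok g a b c d ->
  (forall z, inrect a b c d z -> Cmod (g z) <= M) ->
  Cmod (Irect g a b c d) <= 2 * ((b - a) + (d - c)) * M.
Proof.
  intros Hab Hcd Hok HM. unfold Irect.
  assert (Hin : forall x y, a <= x <= b -> c <= y <= d -> inrect a b c d (x, y)).
  { intros. rewrite inrect_ord by auto. simpl; auto. }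
  assert (E1 : Cmod (CRInt (fun x => g (x, c)) a b) <= (b - a) * M).
  { apply edge_bound; auto. apply hedge_int. intros; apply Hok; apply Hin; [|lra].
    rewrite Rmin_left, Rmax_right in *; auto. intros; apply HM, Hin; lra. }
  assert (E2 : Cmod (CRInt (fun x => g (x, d)) a b) <= (b - a) * M).
  { apply edge_bound; auto. apply hedge_int. intros; apply Hok; apply Hin; [|lra].
    rewrite Rmin_left, Rmax_right in *; auto. intros; apply HM, Hin; lra. }
  assert (E3 : Cmod (CRInt (fun y => g (a, y)) c d) <= (d - c) * M).
  { apply edge_bound; auto. apply vedge_int. intros; apply Hok; apply Hin; [lra|].
    rewrite Rmin_left, Rmax_right in *; auto. intros; apply HM, Hin; lra. }
  assert (E4 : Cmod (CRInt (fun y => g (b, y)) c d) <= (d - c) * M).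
  { apply edge_bound; auto. apply vedge_int. intros; apply Hok; apply Hin; [lra|].
    rewrite Rmin_left, Rmax_right in *; auto. intros; apply HM, Hin; lra. }
  set (A := CRInt (fun x => g (x, c)) a b) in *. set (B := CRInt (fun y => g (b, y)) c d) in *.
  set (C1 := CRInt (fun x => g (x, d)) a b) in *. set (D := CRInt (fun y => g (a, y)) c d) in *.
  replace (A + Ci * B - C1 - Ci * D)%C with (A + Ci * B + (- C1 + - (Ci * D)))%C by ring.
  eapply Rle_trans. apply Cmod_triangle. eapply Rle_trans. apply Rplus_le_compat; apply Cmod_triangle.
  rewrite !Cmod_opp, !Cmod_mult, Cmod_Ci. lra.
Qed.

Lemma small_zero x K : 0 <= x -> (forall eps, 0 < eps -> x <= eps * K) -> x = 0.
Proof.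
  intros Hx H. destruct (Rle_lt_dec x 0). lra. exfalso.
  assert (HK : 0 <= K). { specialize (H 1 Rlt_0_1). lra. }
  specialize (H (x / (2 * (K + 1)))). assert (0 < x / (2 * (K + 1))) by (apply Rdiv_lt_0_compat; lra).
  specialize (H H0). assert (x / (2 * (K + 1)) * K < x).
  { unfold Rdiv. rewrite Rmult_assoc. assert (/ (2 * (K+1)) * K < 1).
    { apply Rmult_lt_reg_l with (2 * (K+1)). lra. field_simplify; lra. } nra. }
  lra.
Qed.

Lemma ccont_affine (al be : C) z : ccont (fun w => (al + be * w)%C) z.
Proof.
  intros e He. exists (e / (Cmod be + 1)). pose proof (Cmod_ge_0 be). split.
  apply Rdiv_lt_0_compat; lra. intros w Hw.
  replace (al + be * w - (al + be * z))%C with (be * (w - z))%C by ring.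
  rewrite Cmod_mult. apply Rle_lt_trans with ((Cmod be + 1) * Cmod (w - z)).
  pose proof (Cmod_ge_0 (w - z)). nra.
  apply Rmult_lt_reg_l with (/ (Cmod be + 1)). apply Rinv_0_lt_compat; lra.
  rewrite <- Rmult_assoc, Rinv_l, Rmult_1_l by lra. rewrite Rmult_comm. exact Hw.
Qed.

Lemma ccont_minus f h z : ccont f z -> ccont h z -> ccont (fun w => (f w - h w)%C) z.
Proof.
  intros H1 H2 e He. destruct (H1 (e/2)) as [d1 [Hd1 K1]]; [lra|]. destruct (H2 (e/2)) as [d2 [Hd2 K2]]; [lra|].
  exists (Rmin d1 d2). split. apply Rmin_pos; auto. intros w Hw.
  replace (f w - h w - (f z - h z))%C with ((f w - f z) + - (h w - h z))%C by ring.
  eapply Rle_lt_trans. apply Cmod_triangle. rewrite Cmod_opp.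
  assert (A := K1 w (Rlt_le_trans _ _ _ Hw (Rmin_l _ _))).
  assert (B := K2 w (Rlt_le_trans _ _ _ Hw (Rmin_r _ _))). lra.
Qed.

Theorem goursat g a b c d : a <= b -> c <= d -> hol_ok g a b c d -> Irect g a b c d = RtoC 0.
Proof.
  intros Hab Hcd Hol.
  set (r0 := mkR a b c d).
  assert (INV := seqR_inv g r0 Hab Hcd Hol). simpl in INV.
  set (sq := seqR g r0) in *.
  assert (Mono : forall n k, ra (sq n) <= ra (sq (n + k)%nat) /\ rb (sq (n + k)%nat) <= rb (sq n) /\
                           rc (sq n) <= rc (sq (n + k)%nat) /\ rd (sq (n + k)%nat) <= rd (sq n)).
  { intros n k. induction k. rewrite Nat.add_0_r. lra.
    rewrite Nat.add_succ_r. destruct (INV (n + k)%nat) as [_ [_ [_ [_ [_ [_ [_ [_ [_ G]]]]]]]]].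
    destruct G as [G1 [G2 [_ [G4 [G5 _]]]]]. change (sq (S (n + k))) with (pick g (sq (n + k)%nat)). lra. }
  assert (Cross : forall m n, ra (sq m) <= rb (sq n) /\ rc (sq m) <= rd (sq n)).
  { intros m n. destruct (Nat.le_ge_cases m n) as [Hmn|Hmn].
    - destruct (Mono m (n - m)%nat) as [M1 [_ [M3 _]]]. replace (m + (n - m))%nat with n in * by lia.
      destruct (INV n) as [_ [I2 [_ [_ [I5 _]]]]]. lra.
    - destruct (Mono n (m - n)%nat) as [_ [M2 [_ M4]]]. replace (n + (m - n))%nat with m in * by lia.
      destruct (INV m) as [_ [I2 [_ [_ [I5 _]]]]]. lra. }
  destruct (completeness (fun x => exists n, x = ra (sq n))) as [x0 [Ux Lx]].
  { exists b. intros x [n ->]. destruct (INV n) as [_ [I2 [I3 _]]]. lra. }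
  { exists (ra (sq 0%nat)). exists 0%nat. auto. }
  destruct (completeness (fun y => exists n, y = rc (sq n))) as [y0 [Uy Ly]].
  { exists d. intros y [n ->]. destruct (INV n) as [_ [_ [_ [_ [I5 [I6 _]]]]]]. lra. }
  { exists (rc (sq 0%nat)). exists 0%nat. auto. }
  assert (Hx0 : forall n, ra (sq n) <= x0 <= rb (sq n)).
  { intros n. split. apply Ux. exists n; auto. apply Lx. intros x [m ->]. apply Cross. }
  assert (Hy0 : forall n, rc (sq n) <= y0 <= rd (sq n)).
  { intros n. split. apply Uy. exists n; auto. apply Ly. intros y [m ->]. apply Cross. }
  set (z0 := (x0, y0) : C).
  assert (Hz0 : inrect a b c d z0).
  { rewrite inrect_ord by auto. simpl. destruct (Hx0 0%nat), (Hy0 0%nat). simpl in *. lra. }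
  destruct (Hol z0 Hz0) as [l Hl].
  set (K := 2 * ((b - a) + (d - c)) ^ 2).
  apply Cmod_eq_0. apply (small_zero _ K). apply Cmod_ge_0.
  intros eps Heps.
  destruct (C_deriv_eps g z0 l Hl eps Heps) as [del [Hdel Hd]].
  destruct (archimed (((b - a) + (d - c)) / del)) as [Ar _].
  set (N := Z.to_nat (up (((b - a) + (d - c)) / del))).
  assert (HN : ((b - a) + (d - c)) / del < 2 ^ N).
  { eapply Rlt_le_trans. exact Ar. eapply Rle_trans; [|apply pow2_ge_INR].
    unfold N. rewrite INR_IZR_INZ. apply IZR_le. rewrite Z2Nat.id. lia.
    assert (0 <= ((b - a) + (d - c)) / del) by (apply Rdiv_le_0_compat; lra).
    apply le_IZR. lra. }
  assert (P2 : 0 < 2 ^ N) by (apply pow_lt; lra).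
  destruct (INV N) as [I1 [I2 [I3 [I4 [I5 [I6 [I7 [I8 [I9 _]]]]]]]]].
  set (rN := sq N) in *. simpl in I7, I8, I9.
  set (wN := rb rN - ra rN). set (hN := rd rN - rc rN).
  assert (Hsmall : wN + hN < del).
  { assert (W : (b - a) + (d - c) < 2 ^ N * del).
    { replace ((b - a) + (d - c)) with ((((b - a) + (d - c)) / del) * del) by (field; lra).
      apply Rmult_lt_compat_r; auto. }
    unfold wN, hN. rewrite I7, I8.
    replace ((b - a) / 2 ^ N + (d - c) / 2 ^ N) with (((b - a) + (d - c)) * / 2 ^ N) by (field; lra).
    apply Rmult_lt_reg_l with (2 ^ N); auto. rewrite (Rmult_comm _ (/ _)), <- Rmult_assoc, Rinv_r, Rmult_1_l by lra.
    exact W. }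
  set (E := fun z => (g z - ((g z0 - z0 * l) + l * z))%C).
  assert (OKN : hol_ok g (ra rN) (rb rN) (rc rN) (rd rN)).
  { eapply hol_ok_sub; [| | | | | |exact Hol]; lra. }
  assert (IE : IR g rN = Irect E (ra rN) (rb rN) (rc rN) (rd rN)).
  { unfold E, IR. rewrite Irect_minus. rewrite Irect_affine. ring.
    apply hol_rect_ok; auto.
    intros z _. apply ccont_affine. }
  assert (OKE : rect_ok E (ra rN) (rb rN) (rc rN) (rd rN)).
  { intros z Hz. unfold E. apply ccont_minus. apply holo_ccont; auto. apply ccont_affine. }
  assert (BE := Irect_bound E (ra rN) (rb rN) (rc rN) (rd rN) (eps * (wN + hN)) I2 I5 OKE).
  assert (Bnd : Cmod (IR g rN) <= 2 * (wN + hN) * (eps * (wN + hN))).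
  { rewrite IE. apply BE. intros z Hz. rewrite inrect_ord in Hz by auto.
    destruct z as [x y]. simpl in Hz.
    assert (Dz : Cmod ((x, y) - z0) <= wN + hN).
    { unfold z0, Cminus, Cplus, Copp; simpl. eapply Rle_trans. apply Cmod_pair_le.
      destruct (Hx0 N), (Hy0 N). fold rN in H, H0, H1, H2. unfold wN, hN.
      apply Rplus_le_compat; apply Rabs_le; lra. }
    unfold E. replace (g (x, y) - (g z0 - z0 * l + l * (x, y)))%C with (g (x, y) - g z0 - ((x, y) - z0) * l)%C by ring.
    eapply Rle_trans. apply Hd. lra. apply Rmult_le_compat_l; lra. }
  change (IR g r0) with (Irect g a b c d) in I9.
  eapply Rle_trans. exact I9.
  assert (WH : wN + hN = ((b - a) + (d - c)) / 2 ^ N) by (unfold wN, hN; rewrite I7, I8; field; lra).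
  rewrite WH in Bnd. unfold K.
  apply Rle_trans with (2 ^ N * (2 ^ N * 1) * (2 * (((b - a) + (d - c)) / 2 ^ N) * (eps * (((b - a) + (d - c)) / 2 ^ N)))).
  apply Rmult_le_compat_l. nra. exact Bnd.
  right. field. lra.
Qed.

Lemma inrect_swap_x a b c d z : inrect a b c d z <-> inrect b a c d z.
Proof. unfold inrect. rewrite Rmin_comm, Rmax_comm. tauto. Qed.
Lemma inrect_swap_y a b c d z : inrect a b c d z <-> inrect a b d c z.
Proof. unfold inrect. rewrite (Rmin_comm c), (Rmax_comm c). tauto. Qed.

Lemma Copp_eq0 (x : C) : (- x)%C = RtoC 0 -> x = RtoC 0.
Proof. intros H. replace x with (- - x)%C by ring. rewrite H. apply injective_projections; simpl; ring. Qed.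

Lemma goursat_gen g a b c d : hol_ok g a b c d -> Irect g a b c d = RtoC 0.
Proof.
  intros H. destruct (Rle_lt_dec a b) as [Hab|Hab]; destruct (Rle_lt_dec c d) as [Hcd|Hcd].
  - apply goursat; auto.
  - assert (H' : hol_ok g a b d c) by (intros z Hz; apply H; apply inrect_swap_y; auto).
    apply Copp_eq0. rewrite <- Irect_swap_y by (apply hol_rect_ok; auto). apply goursat; auto; lra.
  - assert (H' : hol_ok g b a c d) by (intros z Hz; apply H; apply inrect_swap_x; auto).
    apply Copp_eq0. rewrite <- Irect_swap_x by (apply hol_rect_ok; auto). apply goursat; auto; lra.
  - assert (H' : hol_ok g b a d c) by (intros z Hz; apply H; apply inrect_swap_x, inrect_swap_y; auto).
    assert (H'' : hol_ok g b a c d) by (intros z Hz; apply H; apply inrect_swap_x; auto).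
    apply Copp_eq0. rewrite <- Irect_swap_x by (apply hol_rect_ok; auto).
    apply Copp_eq0. rewrite <- Irect_swap_y by (apply hol_rect_ok; auto). apply goursat; auto; lra.
Qed.

Lemma edge_bound_gen (f : R -> C) a b M : CexRInt f a b ->
  (forall x, Rmin a b <= x <= Rmax a b -> Cmod (f x) <= M) -> Cmod (CRInt f a b) <= Rabs (b - a) * M.
Proof.
  intros Hf HM. destruct (Rle_lt_dec a b).
  - rewrite Rabs_right by lra. apply edge_bound; auto. intros; apply HM. rewrite Rmin_left, Rmax_right; lra.
  - assert (Hf' : CexRInt f b a) by (apply (@ex_RInt_swap C_R_CompleteNormedModule); auto).
    rewrite (CRInt_swap f b a Hf'). rewrite Cmod_opp. rewrite Rabs_left by lra.
    replace (- (b - a)) with (a - b) by ring. apply edge_bound. lra. auto.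
    intros; apply HM. rewrite Rmin_right, Rmax_left; lra.
Qed.

Lemma Irect_bound_gen g a b c d M : rect_ok g a b c d ->
  (forall z, inrect a b c d z -> Cmod (g z) <= M) ->
  Cmod (Irect g a b c d) <= 2 * (Rabs (b - a) + Rabs (d - c)) * M.
Proof.
  intros Hok HM. unfold Irect.
  assert (E1 : Cmod (CRInt (fun x => g (x, c)) a b) <= Rabs (b - a) * M).
  { apply edge_bound_gen. apply hedge_int. intros; apply Hok; split; simpl; auto. apply between_a.
    intros; apply HM; split; simpl; auto. apply between_a. }
  assert (E2 : Cmod (CRInt (fun x => g (x, d)) a b) <= Rabs (b - a) * M).
  { apply edge_bound_gen. apply hedge_int. intros; apply Hok; split; simpl; auto. apply between_b.
    intros; apply HM; split; simpl; auto. apply between_b. }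
  assert (E3 : Cmod (CRInt (fun y => g (a, y)) c d) <= Rabs (d - c) * M).
  { apply edge_bound_gen. apply vedge_int. intros; apply Hok; split; simpl; auto. apply between_a.
    intros; apply HM; split; simpl; auto. apply between_a. }
  assert (E4 : Cmod (CRInt (fun y => g (b, y)) c d) <= Rabs (d - c) * M).
  { apply edge_bound_gen. apply vedge_int. intros; apply Hok; split; simpl; auto. apply between_b.
    intros; apply HM; split; simpl; auto. apply between_b. }
  set (A := CRInt (fun x => g (x, c)) a b) in *. set (B := CRInt (fun y => g (b, y)) c d) in *.
  set (C1 := CRInt (fun x => g (x, d)) a b) in *. set (D := CRInt (fun y => g (a, y)) c d) in *.
  replace (A + Ci * B - C1 - Ci * D)%C with (A + Ci * B + (- C1 + - (Ci * D)))%C by ring.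
  eapply Rle_trans. apply Cmod_triangle. eapply Rle_trans. apply Rplus_le_compat; apply Cmod_triangle.
  rewrite !Cmod_opp, !Cmod_mult, Cmod_Ci. lra.
Qed.

Lemma rect_ok_sub g a b c d a' b' c' d' :
  (forall z, inrect a' b' c' d' z -> inrect a b c d z) -> rect_ok g a b c d -> rect_ok g a' b' c' d'.
Proof. intros Hs H z Hz. apply H, Hs, Hz. Qed.

Lemma CRInt_point (f : R -> C) a : CRInt f a a = RtoC 0.
Proof. apply (@RInt_point C_R_CompleteNormedModule). Qed.

Lemma Irect_degen_x g a c d : Irect g a a c d = RtoC 0.
Proof.
  unfold Irect. rewrite !CRInt_point. apply injective_projections; simpl; ring.
Qed.
Lemma Irect_degen_y g a b c : Irect g a b c c = RtoC 0.
Proof.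
  unfold Irect. rewrite !CRInt_point. apply injective_projections; simpl; ring.
Qed.

Ltac rsolve := unfold inrect, Rmin, Rmax in *; simpl in *; repeat destruct Rle_dec; lra.

Lemma between_abs a a' x : Rmin a a' <= x <= Rmax a a' -> Rabs (x - a) <= Rabs (a' - a).
Proof. intros H. unfold Rmin, Rmax, Rabs in *. repeat destruct Rle_dec; repeat destruct Rcase_abs; lra. Qed.

Lemma goursat_corner g a b c d : rect_ok g a b c d ->
  (forall z, inrect a b c d z -> z <> (a, c) -> @ex_derive C_AbsRing C_NormedModule g z) ->
  Irect g a b c d = RtoC 0.
Proof.
  intros Hok Hol.
  destruct (Req_dec a b) as [E|Hab]. { subst; apply Irect_degen_x. }
  destruct (Req_dec c d) as [E|Hcd]. { subst; apply Irect_degen_y. }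
  set (p := (a, c) : C).
  assert (Hp : inrect a b c d p) by (unfold p; rsolve).
  destruct (Hok p Hp 1 Rlt_0_1) as [del [Hdel Hc]].
  set (L := Rabs (b - a) + Rabs (d - c)).
  assert (HL : 0 < L). { unfold L. assert (0 < Rabs (b - a)) by (apply Rabs_pos_lt; lra). pose proof (Rabs_pos (d - c)). lra. }
  set (M := Cmod (g p) + 1).
  assert (HM : 0 < M) by (unfold M; pose proof (Cmod_ge_0 (g p)); lra).
  apply Cmod_eq_0. apply (small_zero _ (2 * L * M)). apply Cmod_ge_0.
  intros eps Heps.
  set (t := Rmin eps (Rmin 1 (del / (2 * L)))).
  assert (Ht0 : 0 < t). { unfold t. apply Rmin_pos; auto. apply Rmin_pos. lra. apply Rdiv_lt_0_compat; lra. }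
  assert (Ht1 : t <= 1) by (unfold t; eapply Rle_trans; [apply Rmin_r| apply Rmin_l]).
  assert (Hte : t <= eps) by (unfold t; apply Rmin_l).
  assert (HtL : t * L < del).
  { assert (t <= del / (2 * L)) by (unfold t; eapply Rle_trans; [apply Rmin_r| apply Rmin_r]).
    apply Rle_lt_trans with (del / (2 * L) * L). apply Rmult_le_compat_r; lra.
    replace (del / (2 * L) * L) with (del / 2) by (field; lra). lra. }
  set (a' := a + t * (b - a)). set (c' := c + t * (d - c)).
  assert (Ha' : (a < a' <= b) \/ (b <= a' < a)).
  { unfold a'. destruct (Rlt_le_dec a b). left; split; nra. right; split; nra. }
  assert (Hc' : (c < c' <= d) \/ (d <= c' < c)).
  { unfold c'. destruct (Rlt_le_dec c d). left; split; nra. right; split; nra. }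
  assert (Hsz : Rabs (a' - a) + Rabs (c' - c) = t * L).
  { unfold a', c', L. replace (a + t * (b - a) - a) with (t * (b - a)) by ring.
    replace (c + t * (d - c) - c) with (t * (d - c)) by ring. rewrite !Rabs_mult, Rabs_right by lra. ring. }
  clearbody a' c'.
  assert (S1 : Irect g a b c d = (Irect g a a' c c' + Irect g a a' c' d + (Irect g a' b c c' + Irect g a' b c' d))%C).
  { rewrite (Irect_split_x g a b c d a'); auto. 2: rsolve.
    rewrite (Irect_split_y g a a' c d c'). rewrite (Irect_split_y g a' b c d c'). reflexivity.
    - eapply rect_ok_sub; [|exact Hok]. intros z Hz. destruct Ha', Hc'; rsolve.
    - rsolve.
    - eapply rect_ok_sub; [|exact Hok]. intros z Hz. destruct Ha', Hc'; rsolve.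
    - rsolve. }
  assert (Z2 : Irect g a a' c' d = RtoC 0).
  { apply goursat_gen. intros z Hz. apply Hol. destruct Ha', Hc'; rsolve.
    intros E. subst z. destruct Ha', Hc'; rsolve. }
  assert (Z3 : Irect g a' b c c' = RtoC 0).
  { apply goursat_gen. intros z Hz. apply Hol. destruct Ha', Hc'; rsolve.
    intros E. subst z. destruct Ha', Hc'; rsolve. }
  assert (Z4 : Irect g a' b c' d = RtoC 0).
  { apply goursat_gen. intros z Hz. apply Hol. destruct Ha', Hc'; rsolve.
    intros E. subst z. destruct Ha', Hc'; rsolve. }
  rewrite S1, Z2, Z3, Z4.
  replace (Irect g a a' c c' + RtoC 0 + (RtoC 0 + RtoC 0))%C with (Irect g a a' c c') by (apply injective_projections; simpl; ring).
  eapply Rle_trans. apply (Irect_bound_gen g a a' c c' M).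
  - eapply rect_ok_sub; [|exact Hok]. intros z Hz. destruct Ha', Hc'; rsolve.
  - intros z Hz. destruct z as [x y].
    assert (D : Cmod ((x, y) - p) < del).
    { unfold p, Cminus, Cplus, Copp; simpl. eapply Rle_lt_trans. apply Cmod_pair_le.
      destruct Hz as [Hz1 Hz2]. simpl in Hz1, Hz2.
      apply between_abs in Hz1. apply between_abs in Hz2.
      replace (x + - a) with (x - a) by ring. replace (y + - c) with (y - c) by ring. lra. }
    specialize (Hc _ D). unfold M.
    replace (g (x, y)) with (g p + (g (x, y) - g p))%C by ring.
    eapply Rle_trans. apply Cmod_triangle. lra.
  - rewrite Hsz. replace (2 * (t * L) * M) with (t * (2 * L * M)) by ring.
    apply Rmult_le_compat_r; auto. nra.
Qed.


Theorem goursat_exc g a b c d (p : C) : rect_ok g a b c d ->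
  (forall z, inrect a b c d z -> z <> p -> @ex_derive C_AbsRing C_NormedModule g z) ->
  Irect g a b c d = RtoC 0.
Proof.
  intros Hok Hol. destruct (classic (inrect a b c d p)) as [Hp|Hp].
  2: { apply goursat_gen. intros z Hz. apply Hol; auto. intros ->. auto. }
  destruct p as [p1 p2]. destruct Hp as [Hp1 Hp2]. simpl in Hp1, Hp2.
  assert (Sub : forall a' b' c' d', (forall z, inrect a' b' c' d' z -> inrect a b c d z) ->
     rect_ok g a' b' c' d' /\ (forall z, inrect a' b' c' d' z -> z <> (p1, p2) -> @ex_derive C_AbsRing C_NormedModule g z)).
  { intros a' b' c' d' Hs. split. eapply rect_ok_sub; eauto. intros; apply Hol; auto. }
  rewrite (Irect_split_x g a b c d p1); auto.
  rewrite (Irect_split_y g a p1 c d p2). rewrite (Irect_split_y g p1 b c d p2).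
  2: { apply (Sub p1 b c d). intros z Hz; rsolve. }
  2: { rsolve. }
  2: { apply (Sub a p1 c d). intros z Hz; rsolve. }
  2: { rsolve. }
  assert (Z1 : Irect g p1 b p2 d = RtoC 0).
  { destruct (Sub p1 b p2 d) as [O H]. intros z Hz; rsolve. apply goursat_corner; auto. }
  assert (Z2 : Irect g a p1 p2 d = RtoC 0).
  { destruct (Sub a p1 p2 d) as [O H]. intros z Hz; rsolve.
    apply Copp_eq0. rewrite <- Irect_swap_x by auto. apply goursat_corner.
    apply rect_ok_swap_x; auto. intros z Hz Hz'. apply H; auto. apply inrect_swap_x; auto. }
  assert (Z3 : Irect g p1 b c p2 = RtoC 0).
  { destruct (Sub p1 b c p2) as [O H]. intros z Hz; rsolve.
    apply Copp_eq0. rewrite <- Irect_swap_y by auto. apply goursat_corner.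
    apply rect_ok_swap_y; auto. intros z Hz Hz'. apply H; auto. apply inrect_swap_y; auto. }
  assert (Z4 : Irect g a p1 c p2 = RtoC 0).
  { destruct (Sub a p1 c p2) as [O H]. intros z Hz; rsolve.
    apply Copp_eq0. rewrite <- Irect_swap_x by auto.
    apply Copp_eq0. rewrite <- Irect_swap_y by (apply rect_ok_swap_x; auto). apply goursat_corner.
    apply rect_ok_swap_y, rect_ok_swap_x; auto. intros z Hz Hz'. apply H; auto.
    apply inrect_swap_x, inrect_swap_y; auto. }
  rewrite Z1, Z2, Z3, Z4. apply injective_projections; simpl; ring.
Qed.

Lemma Cmod_mono_snd x s y : Rabs s <= Rabs y -> Cmod (x, s) <= Cmod (x, y).
Proof.
  intros H. unfold Cmod; simpl. apply sqrt_le_1_alt. rewrite !Rmult_1_r.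
  assert (Rsqr s <= Rsqr y) by (apply Rsqr_le_abs_1; auto). unfold Rsqr in *. lra.
Qed.

Lemma Cmod_shift x y a b : Cmod ((x + a)%R, (y + b)%R) <= Cmod (x, y) + Rabs a + Rabs b.
Proof.
  replace (((x + a)%R, (y + b)%R) : C) with ((x, y) + (a, b))%C by reflexivity.
  eapply Rle_trans. apply Cmod_triangle. pose proof (Cmod_pair_le a b). lra.
Qed.

Definition Hs (g : C -> C) (a b y : R) : C := CRInt (fun t => g (t, y)) a b.
Definition Vs (g : C -> C) (x c d : R) : C := CRInt (fun s => g (x, s)) c d.
Definition prim (g : C -> C) (z : C) : C := (Hs g 0 (fst z) 0 + Ci * Vs g (fst z) 0 (snd z))%C.

Lemma CRInt_minus_const (f : R -> C) a b (k : C) : CexRInt f a b ->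
  CRInt (fun t => (f t - k)%C) a b = (CRInt f a b - RtoC (b - a) * k)%C.
Proof.
  intros H. rewrite (@RInt_minus C_R_CompleteNormedModule f (fun _ => k)); auto.
  rewrite (@RInt_const C_R_CompleteNormedModule). rewrite scal_CR. reflexivity.
  apply (@ex_RInt_const C_R_CompleteNormedModule).
Qed.

Theorem prim_deriv g z :
  (forall w, Cmod w < 1 -> ccont g w) ->
  (forall a b c d, (forall w, inrect a b c d w -> Cmod w < 1) -> Irect g a b c d = RtoC 0) ->
  Cmod z < 1 -> @is_derive C_AbsRing C_NormedModule (prim g) z (g z).
Proof.
  intros Hc Hr Hz. apply C_deriv_of_eps. intros eps Heps.
  destruct (Hc z Hz (eps / 2)) as [d1 [Hd1 K1]]; [lra|].
  exists (Rmin (d1 / 2) ((1 - Cmod z) / 2)). split. apply Rmin_pos; lra.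
  intros w Hw. destruct z as [x y]. destruct w as [x' y'].
  set (u := x' - x). set (v := y' - y).
  assert (Hk : ((x', y') - (x, y))%C = (u, v)).
  { unfold u, v. apply injective_projections; simpl; ring. }
  rewrite Hk in Hw |- *.
  assert (Hu : Rabs u <= Cmod (u, v)) by (apply (Rle_trans _ _ _ (Rmax_l _ (Rabs v)) (Rmax_Cmod (u, v)))).
  assert (Hv : Rabs v <= Cmod (u, v)) by (apply (Rle_trans _ _ _ (Rmax_r (Rabs u) _) (Rmax_Cmod (u, v)))).
  assert (Hw1 : Cmod (u, v) < d1 / 2) by (eapply Rlt_le_trans; [exact Hw|apply Rmin_l]).
  assert (Hw2 : Cmod (u, v) < (1 - Cmod (x, y)) / 2) by (eapply Rlt_le_trans; [exact Hw|apply Rmin_r]).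
  replace x' with (x + u) by (unfold u; ring). replace y' with (y + v) by (unfold v; ring).
  clearbody u v. clear Hk Hw x' y'.
  assert (PH : forall t s, Rmin x (x + u) <= t <= Rmax x (x + u) -> Rabs s <= Rabs y ->
             Cmod (t, s) < 1).
  { intros t s Ht Hs. apply between_abs in Ht. replace (x + u - x) with u in Ht by ring.
    replace t with (x + (t - x)) by ring. replace s with (s + 0) by ring.
    eapply Rle_lt_trans. apply Cmod_shift. rewrite Rabs_R0.
    pose proof (Cmod_mono_snd x s y Hs). lra. }
  assert (PV : forall s, Rmin y (y + v) <= s <= Rmax y (y + v) -> Cmod ((x + u)%R, s) < 1).
  { intros s Hs. apply between_abs in Hs. replace (y + v - y) with v in Hs by ring. replace s with (y + (s - y)) by ring.
    eapply Rle_lt_trans. apply Cmod_shift. lra. }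
  assert (P0 : forall t, Rmin 0 x <= t <= Rmax 0 x -> Cmod (t, 0) < 1).
  { intros t Ht. apply between_abs in Ht. rewrite !Rminus_0_r in Ht.
    apply Rle_lt_trans with (Cmod (x, y)); [|auto].
    eapply Rle_trans. apply Cmod_pair_le. rewrite Rabs_R0, Rplus_0_r.
    eapply Rle_trans. exact Ht. apply (Rle_trans _ _ _ (Rmax_l _ (Rabs y)) (Rmax_Cmod (x, y))). }
  assert (PV0 : forall s, Rmin 0 y <= s <= Rmax 0 y -> Rabs s <= Rabs y).
  { intros s Hs. apply between_abs in Hs. rewrite !Rminus_0_r in Hs. auto. }
  assert (I1 : CexRInt (fun t => g (t, 0)) 0 x).
  { apply hedge_int. intros t Ht. apply Hc. apply P0; auto. }
  assert (I2 : CexRInt (fun t => g (t, 0)) x (x + u)).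
  { apply hedge_int. intros t Ht. apply Hc. apply PH; auto. rewrite Rabs_R0; apply Rabs_pos. }
  assert (I3 : CexRInt (fun s => g ((x + u)%R, s)) 0 y).
  { apply vedge_int. intros s Hs. apply Hc. apply PH; auto. apply between_b. }
  assert (I4 : CexRInt (fun s => g ((x + u)%R, s)) y (y + v)).
  { apply vedge_int. intros s Hs. apply Hc. apply PV; auto. }
  assert (I5 : CexRInt (fun t => g (t, y)) x (x + u)).
  { apply hedge_int. intros t Ht. apply Hc. apply PH; auto. lra. }
  assert (R0 : Irect g x (x + u) 0 y = RtoC 0).
  { apply Hr. intros w [Hw1' Hw2']. destruct w as [t s]. apply PH; auto. }
  unfold prim, Hs, Vs; simpl.
  rewrite <- (CRInt_Chasles (fun t => g (t, 0)) 0 x (x + u)) by auto.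
  rewrite <- (CRInt_Chasles (fun s => g ((x + u)%R, s)) 0 y (y + v)) by auto.
  unfold Irect in R0.
  set (A := CRInt (fun t => g (t, 0)) 0 x) in *.
  set (B := CRInt (fun t => g (t, 0)) x (x + u)) in *.
  set (C1 := CRInt (fun s => g ((x + u)%R, s)) 0 y) in *.
  set (D := CRInt (fun s => g ((x + u)%R, s)) y (y + v)) in *.
  set (E := CRInt (fun t => g (t, y)) x (x + u)) in *.
  set (F := CRInt (fun s => g (x, s)) 0 y) in *.
  assert (Eq : (A + B + Ci * (C1 + D) - (A + Ci * F) - (u, v) * g (x, y))%C =
               ((E - RtoC u * g (x, y)) + Ci * (D - RtoC v * g (x, y)))%C).
  { replace B with (B + Ci * C1 - E - Ci * F - RtoC 0 + E - Ci * C1 + Ci * F)%C by (apply injective_projections; simpl; ring).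
    rewrite <- R0. apply injective_projections; simpl; ring. }
  rewrite Eq.
  assert (M1 : (E - RtoC u * g (x, y))%C = CRInt (fun t => (g (t, y) - g (x, y))%C) x (x + u)).
  { rewrite CRInt_minus_const by auto. fold E. replace (x + u - x) with u by ring. reflexivity. }
  assert (M2 : (D - RtoC v * g (x, y))%C = CRInt (fun s => (g ((x + u)%R, s) - g (x, y))%C) y (y + v)).
  { rewrite CRInt_minus_const by auto. fold D. replace (y + v - y) with v by ring. reflexivity. }
  rewrite M1, M2.
  assert (B1 : Cmod (CRInt (fun t => (g (t, y) - g (x, y))%C) x (x + u)) <= Rabs (x + u - x) * (eps / 2)).
  { apply edge_bound_gen.
    - apply (@ex_RInt_minus C_R_CompleteNormedModule); auto. apply (@ex_RInt_const C_R_CompleteNormedModule).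
    - intros t Ht. apply Rlt_le. apply K1. apply between_abs in Ht.
      replace ((t, y) - (x, y))%C with (((t - x)%R, 0) : C) by (apply injective_projections; simpl; ring).
      eapply Rle_lt_trans. apply Cmod_pair_le. rewrite Rabs_R0. replace (x + u - x) with u in Ht by ring. lra. }
  assert (B2 : Cmod (CRInt (fun s => (g ((x + u)%R, s) - g (x, y))%C) y (y + v)) <= Rabs (y + v - y) * (eps / 2)).
  { apply edge_bound_gen.
    - apply (@ex_RInt_minus C_R_CompleteNormedModule); auto. apply (@ex_RInt_const C_R_CompleteNormedModule).
    - intros t Ht. apply Rlt_le. apply K1. apply between_abs in Ht.
      replace (((x + u)%R, t) - (x, y))%C with ((u, (t - y)%R) : C) by (apply injective_projections; simpl; ring).
      eapply Rle_lt_trans. apply Cmod_pair_le. replace (y + v - y) with v in Ht by ring. lra. }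
  replace (x + u - x) with u in B1 by ring. replace (y + v - y) with v in B2 by ring.
  eapply Rle_trans. apply Cmod_triangle. rewrite Cmod_mult, Cmod_Ci.
  assert (Rabs u * (eps / 2) <= Cmod (u, v) * (eps / 2)) by (apply Rmult_le_compat_r; lra).
  assert (Rabs v * (eps / 2) <= Cmod (u, v) * (eps / 2)) by (apply Rmult_le_compat_r; lra).
  lra.
Qed.

Definition rdiff (gam : R -> C) (t : R) (v : C) := forall eps, 0 < eps -> exists delta, 0 < delta /\
  forall s, Rabs (s - t) < delta -> Cmod (gam s - gam t - RtoC (s - t) * v) <= eps * Rabs (s - t).

Lemma rderiv_eps (f : R -> R) t l : derivable_pt_lim f t l ->
  forall eps, 0 < eps -> exists delta, 0 < delta /\ forall s, Rabs (s - t) < delta ->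
    Rabs (f s - f t - (s - t) * l) <= eps * Rabs (s - t).
Proof.
  intros H eps Heps. destruct (H eps Heps) as [d Hd]. exists d. split. apply cond_pos.
  intros s Hs. destruct (Req_dec s t) as [E|E].
  { subst. replace (f t - f t - (t - t) * l) with 0 by ring. rewrite Rabs_R0, Rminus_diag, Rabs_R0. lra. }
  specialize (Hd (s - t)). replace (t + (s - t)) with s in Hd by ring.
  assert (Hst : s - t <> 0) by lra. specialize (Hd Hst Hs).
  replace (f s - f t - (s - t) * l) with ((s - t) * ((f s - f t) / (s - t) - l)) by (field; auto).
  rewrite Rabs_mult. rewrite Rmult_comm. apply Rmult_le_compat_r. apply Rabs_pos. lra.
Qed.

Lemma rdiff_pair (u w : R -> R) t lu lw : derivable_pt_lim u t lu -> derivable_pt_lim w t lw ->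
  rdiff (fun s => (u s, w s)) t (lu, lw).
Proof.
  intros Hu Hw eps Heps.
  destruct (rderiv_eps u t lu Hu (eps/2)) as [d1 [Hd1 K1]]; [lra|].
  destruct (rderiv_eps w t lw Hw (eps/2)) as [d2 [Hd2 K2]]; [lra|].
  exists (Rmin d1 d2). split. apply Rmin_pos; auto. intros s Hs.
  assert (A := K1 s (Rlt_le_trans _ _ _ Hs (Rmin_l _ _))).
  assert (B := K2 s (Rlt_le_trans _ _ _ Hs (Rmin_r _ _))).
  replace ((u s, w s) - (u t, w t) - RtoC (s - t) * (lu, lw))%C with
    (((u s - u t - (s - t) * lu)%R, (w s - w t - (s - t) * lw)%R) : C)
    by (apply injective_projections; simpl; ring).
  eapply Rle_trans. apply Cmod_pair_le. lra.
Qed.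

Lemma rdiff_comp (G : C -> C) gam t v l : rdiff gam t v ->
  @is_derive C_AbsRing C_NormedModule G (gam t) l ->
  rdiff (fun s => G (gam s)) t (l * v)%C.
Proof.
  intros Hg HG eps Heps.
  set (A := Cmod v + 1). assert (HA : 0 < A) by (unfold A; pose proof (Cmod_ge_0 v); lra).
  set (Lm := Cmod l + 1). assert (HL : 0 < Lm) by (unfold Lm; pose proof (Cmod_ge_0 l); lra).
  destruct (C_deriv_eps G (gam t) l HG (eps / (2 * A))) as [dG [HdG KG]]. apply Rdiv_lt_0_compat; lra.
  destruct (Hg (Rmin 1 (eps / (2 * Lm)))) as [dg [Hdg Kg]]. apply Rmin_pos. lra. apply Rdiv_lt_0_compat; lra.
  exists (Rmin dg (dG / A)). split. apply Rmin_pos; auto. apply Rdiv_lt_0_compat; lra.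
  intros s Hs. specialize (Kg s (Rlt_le_trans _ _ _ Hs (Rmin_l _ _))).
  assert (Hs2 : Rabs (s - t) < dG / A) by (eapply Rlt_le_trans; [exact Hs|apply Rmin_r]).
  pose proof (Rabs_pos (s - t)).
  assert (Kg1 : Cmod (gam s - gam t - RtoC (s - t) * v) <= 1 * Rabs (s - t)).
  { eapply Rle_trans. exact Kg. apply Rmult_le_compat_r. auto. apply Rmin_l. }
  assert (Kg2 : Cmod (gam s - gam t - RtoC (s - t) * v) <= (eps / (2 * Lm)) * Rabs (s - t)).
  { eapply Rle_trans. exact Kg. apply Rmult_le_compat_r. auto. apply Rmin_r. }
  assert (Dg : Cmod (gam s - gam t) <= A * Rabs (s - t)).
  { replace (gam s - gam t)%C with ((gam s - gam t - RtoC (s - t) * v) + RtoC (s - t) * v)%C by ring.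
    eapply Rle_trans. apply Cmod_triangle. rewrite Cmod_mult, Cmod_R. unfold A. lra. }
  assert (Dg' : Cmod (gam s - gam t) < dG).
  { eapply Rle_lt_trans. exact Dg. apply Rmult_lt_reg_l with (/ A). apply Rinv_0_lt_compat; auto.
    rewrite <- Rmult_assoc, Rinv_l, Rmult_1_l by lra. rewrite Rmult_comm. exact Hs2. }
  specialize (KG (gam s) Dg').
  replace (G (gam s) - G (gam t) - RtoC (s - t) * (l * v))%C with
    ((G (gam s) - G (gam t) - (gam s - gam t) * l) + l * (gam s - gam t - RtoC (s - t) * v))%C by ring.
  eapply Rle_trans. apply Cmod_triangle. rewrite Cmod_mult.
  assert (X1 : eps / (2 * A) * Cmod (gam s - gam t) <= eps / 2 * Rabs (s - t)).
  { apply Rle_trans with (eps / (2 * A) * (A * Rabs (s - t))).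
    apply Rmult_le_compat_l. apply Rlt_le, Rdiv_lt_0_compat; lra. auto.
    right. field. lra. }
  assert (X2 : Cmod l * Cmod (gam s - gam t - RtoC (s - t) * v) <= eps / 2 * Rabs (s - t)).
  { apply Rle_trans with (Lm * (eps / (2 * Lm) * Rabs (s - t))).
    apply Rmult_le_compat. apply Cmod_ge_0. apply Cmod_ge_0. unfold Lm; lra. auto.
    right. field. lra. }
  lra.
Qed.

Lemma rdiff_is_derive gam t v : rdiff gam t v -> @is_derive R_AbsRing C_R_NormedModule gam t v.
Proof. intros H. apply R_deriv_of_eps. exact H. Qed.

Definition circ (r t : R) : C := ((r * cos t)%R, (r * sin t)%R).

Lemma circ_rdiff r t : rdiff (circ r) t (Ci * circ r t)%C.
Proof.
  replace ((Ci * circ r t)%C) with (((- r * sin t)%R, (r * cos t)%R) : C)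
    by (unfold circ, Ci; apply injective_projections; simpl; ring).
  apply (rdiff_pair (fun s => r * cos s) (fun s => r * sin s)).
  - replace (- r * sin t) with (r * (- sin t)) by ring.
    apply derivable_pt_lim_scal. apply derivable_pt_lim_cos.
  - apply derivable_pt_lim_scal. apply derivable_pt_lim_sin.
Qed.

Lemma Cmod_circ r t : Cmod (circ r t) = Rabs r.
Proof.
  unfold circ, Cmod; simpl. rewrite <- sqrt_Rsqr_abs. f_equal. unfold Rsqr.
  replace (r * cos t * (r * cos t * 1) + r * sin t * (r * sin t * 1)) with (r * r * ((sin t)² + (cos t)²))
    by (unfold Rsqr; ring). rewrite sin2_cos2. ring.
Qed.

Lemma rcont_circ r t : rcont (circ r) t.
Proof.
  apply rcont_pair. apply continuity_pt_scal, continuity_cos. apply continuity_pt_scal, continuity_sin.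
Qed.

Theorem circle_zero g r :
  (forall w, Cmod w < 1 -> ccont g w) ->
  (forall a b c d, (forall w, inrect a b c d w -> Cmod w < 1) -> Irect g a b c d = RtoC 0) ->
  0 <= r < 1 ->
  CRInt (fun t => (g (circ r t) * (Ci * circ r t))%C) 0 (2 * PI) = RtoC 0.
Proof.
  intros Hc Hr Hrr.
  assert (Hin : forall t, Cmod (circ r t) < 1) by (intros; rewrite Cmod_circ, Rabs_right; lra).
  apply CRInt_unique.
  replace (RtoC 0) with (@minus C_R_NormedModule (prim g (circ r (2 * PI))) (prim g (circ r 0))).
  2: { assert (E : circ r (2 * PI) = circ r 0) by (unfold circ; rewrite cos_2PI, sin_2PI, cos_0, sin_0; reflexivity).
       rewrite E. apply (@minus_eq_zero C_R_NormedModule). }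
  apply (@is_RInt_derive C_R_CompleteNormedModule (fun t => prim g (circ r t))).
  - intros t _. apply rdiff_is_derive. apply rdiff_comp. apply circ_rdiff. apply prim_deriv; auto.
  - intros t _. apply rcont_continuous. apply rcont_mult. apply rcont_comp. apply rcont_circ. apply Hc; auto.
    apply rcont_mult. apply rcont_const. apply rcont_circ.
Qed.

Definition En (n : nat) (t : R) : C := ((cos (INR n * t))%R, (- sin (INR n * t))%R).

Lemma En_0 t : En 0 t = RtoC 1.
Proof. unfold En. simpl. rewrite Rmult_0_l, cos_0, sin_0. apply injective_projections; simpl; ring. Qed.

Lemma En_S n t : En (S n) t = (En 1 t * En n t)%C.
Proof.
  unfold En. rewrite S_INR. simpl. rewrite Rmult_1_l.
  replace ((INR n + 1) * t) with (t + INR n * t) by ring.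
  rewrite cos_plus, sin_plus. apply injective_projections; simpl; ring.
Qed.

Lemma En_pow n t : Cpow (En 1 t) n = En n t.
Proof. induction n. simpl. rewrite En_0. reflexivity. simpl. rewrite IHn. symmetry. apply En_S. Qed.

Lemma Cmod_En n t : Cmod (En n t) = 1.
Proof.
  unfold En, Cmod; simpl.
  replace (cos (INR n * t) * (cos (INR n * t) * 1) + - sin (INR n * t) * (- sin (INR n * t) * 1))
    with ((sin (INR n * t))² + (cos (INR n * t))²) by (unfold Rsqr; ring). rewrite sin2_cos2. apply sqrt_1.
Qed.

Lemma circ_En r t : (circ r t * En 1 t)%C = RtoC r.
Proof.
  unfold circ, En. simpl. rewrite Rmult_1_l. apply injective_projections; simpl.
  - replace (r * cos t * cos t - r * sin t * - sin t) with (r * ((sin t)² + (cos t)²)) by (unfold Rsqr; ring).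
    rewrite sin2_cos2. ring.
  - ring.
Qed.

Lemma Cinv_uniq (x y : C) : x <> RtoC 0 -> (x * y)%C = RtoC 1 -> Cinv x = y.
Proof.
  intros Hx H. rewrite <- (Cmult_1_r (Cinv x)). rewrite <- H. rewrite Cmult_assoc.
  rewrite Cinv_l by auto. apply Cmult_1_l.
Qed.

Lemma circ_inv r t : r <> 0 -> Cinv (circ r t) = (RtoC (/ r) * En 1 t)%C.
Proof.
  intros Hr. apply Cinv_uniq.
  - intros E. assert (Cmod (circ r t) = 0) by (rewrite E; apply Cmod_0).
    rewrite Cmod_circ in H. apply Rabs_eq_0 in H. auto.
  - rewrite Cmult_assoc, (Cmult_comm (circ r t)), <- Cmult_assoc, circ_En.
    rewrite <- RtoC_mult. f_equal. field. auto.
Qed.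

Lemma sin_n2PI n : sin (INR n * (2 * PI)) = 0.
Proof. replace (INR n * (2 * PI)) with (0 + 2 * INR n * PI) by ring. rewrite sin_period. apply sin_0. Qed.
Lemma cos_n2PI n : cos (INR n * (2 * PI)) = 1.
Proof. replace (INR n * (2 * PI)) with (0 + 2 * INR n * PI) by ring. rewrite cos_period. apply cos_0. Qed.

Lemma is_RInt_derive_R (f df : R -> R) a b : (forall x, is_derive f x (df x)) -> (forall x, continuous df x) ->
  is_RInt df a b (f b - f a).
Proof. intros H1 H2. apply (is_RInt_derive f df); auto. Qed.

Lemma int_En n : CRInt (En n) 0 (2 * PI) = if Nat.eq_dec n 0 then RtoC (2 * PI) else RtoC 0.
Proof.
  apply CRInt_unique. destruct (Nat.eq_dec n 0) as [->|Hn].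
  - apply (is_RInt_ext (fun _ => RtoC 1)). intros; rewrite En_0; auto.
    replace (RtoC (2 * PI)) with (@scal R_Ring C_R_ModuleSpace (2 * PI - 0) (RtoC 1)).
    apply (@is_RInt_const C_R_NormedModule). rewrite scal_CR. apply injective_projections; simpl; ring.
  - assert (Hn' : INR n <> 0) by (apply not_0_INR; auto).
    unfold En. replace (RtoC 0) with ((0, 0) : C) by reflexivity.
    apply is_RInt_C_pair; simpl.
    + assert (H := is_RInt_derive_R (fun t => sin (INR n * t) / INR n) (fun t => cos (INR n * t)) 0 (2 * PI)).
      simpl in H. rewrite sin_n2PI, Rmult_0_r, sin_0 in H. replace (0 / INR n - 0 / INR n) with 0 in H by (field; auto).
      apply H.
      * intros x. auto_derive; auto. field; auto.
      * intros x. apply (ex_derive_continuous (fun t => cos (INR n * t))). auto_derive; auto.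
    + assert (H := is_RInt_derive_R (fun t => cos (INR n * t) / INR n) (fun t => - sin (INR n * t)) 0 (2 * PI)).
      simpl in H. rewrite cos_n2PI, Rmult_0_r, cos_0 in H. replace (1 / INR n - 1 / INR n) with 0 in H by (field; auto).
      apply H.
      * intros x. auto_derive; auto. field; auto.
      * intros x. apply (ex_derive_continuous (fun t => - sin (INR n * t))). auto_derive; auto.
Qed.

Lemma is_derive_inv_shift (w z : C) : z <> w ->
  @is_derive C_AbsRing C_NormedModule (fun y => Cinv (y - w)) z (- Cinv ((z - w) * (z - w)))%C.
Proof.
  intros Hzw. apply C_deriv_of_eps. intros eps Heps.
  set (a := (z - w)%C). assert (Ha : a <> RtoC 0) by (unfold a; intros E; apply Hzw; 
    replace z with (z - w + w)%C by ring; rewrite E; ring).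
  set (m := Cmod a). assert (Hm : 0 < m) by (apply Cmod_gt_0; auto).
  exists (Rmin (m / 2) (eps * (m * m * m) / 2)). split.
  { apply Rmin_pos. lra. apply Rdiv_lt_0_compat; [|lra]. apply Rmult_lt_0_compat; [lra|]. apply Rmult_lt_0_compat; [apply Rmult_lt_0_compat|]; lra. }
  intros y Hy. set (b := (y - w)%C).
  assert (Hy1 : Cmod (y - z) < m / 2) by (eapply Rlt_le_trans; [exact Hy|apply Rmin_l]).
  assert (Hy2 : Cmod (y - z) < eps * (m * m * m) / 2) by (eapply Rlt_le_trans; [exact Hy|apply Rmin_r]).
  assert (Hb : m / 2 <= Cmod b).
  { unfold b. replace (y - w)%C with (a + (y - z))%C by (unfold a; ring).
    assert (T := Cmod_triangle (a + (y - z)) (- (y - z))). rewrite Cmod_opp in T.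
    replace (a + (y - z) + - (y - z))%C with a in T by ring. fold m in T. lra. }
  assert (Hb0 : b <> RtoC 0) by (intros E; rewrite E, Cmod_0 in Hb; lra).
  replace (/ b - / a - (y - z) * - / (a * a))%C with
    ((y - z) * (y - z) / (a * a * b))%C.
  2: { fold a b. replace (y - z)%C with (b - a)%C by (unfold a, b; ring). field. split; auto. }
  rewrite Cmod_div, !Cmod_mult. fold m.
  2: { apply Cmod_gt_0. rewrite !Cmod_mult. fold m. apply Rmult_lt_0_compat. nra. lra. }
  pose proof (Cmod_ge_0 (y - z)).
  apply Rle_trans with (Cmod (y - z) * Cmod (y - z) / (m * m * (m / 2))).
  { unfold Rdiv. apply Rmult_le_compat_l. nra. apply Rinv_le_contravar. nra.
    apply Rmult_le_compat_l; nra. }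
  apply Rle_trans with ((eps * (m * m * m) / 2) * Cmod (y - z) / (m * m * (m / 2))).
  { unfold Rdiv. apply Rmult_le_compat_r. apply Rlt_le, Rinv_0_lt_compat. nra.
    rewrite (Rmult_comm (eps * _ * _)). apply Rmult_le_compat_l; lra. }
  right. field. lra.
Qed.

Definition dq (f : C -> C) (w l : C) (z : C) : C :=
  if excluded_middle_informative (z = w) then l else ((f z - f w) * Cinv (z - w))%C.

Lemma dq_deriv f w l z : z <> w -> @ex_derive C_AbsRing C_NormedModule f z ->
  @ex_derive C_AbsRing C_NormedModule (dq f w l) z.
Proof.
  intros Hzw [lf Hf].
  assert (Hm : 0 < Cmod (z - w)). { apply Cmod_gt_0. intros E. apply Hzw. replace z with (z - w + w)%C by ring. rewrite E. apply Cplus_0_l. }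
  eexists. apply deriv_AC. eapply is_derive_ext_loc.
  2: { apply (@is_derive_mult C_AbsRing (fun y => (f y - f w)%C) (fun y => Cinv (y - w))).
    + apply (@is_derive_minus C_AbsRing (AbsRing_NormedModule C_AbsRing) f (fun _ => f w)). apply deriv_CA; exact Hf. apply is_derive_const.
    + apply deriv_CA. apply is_derive_inv_shift; auto.
    + intros; apply Cmult_comm. }
  exists (mkposreal _ Hm). intros y Hy. unfold dq. destruct excluded_middle_informative as [E|E]; auto.
  exfalso. subst y. change (Cmod (w - z) < Cmod (z - w)) in Hy.
  rewrite <- Cmod_opp in Hy. replace (- (w - z))%C with (z - w)%C in Hy by ring. lra.
Qed.

Lemma dq_ccont_w f w l : @is_derive C_AbsRing C_NormedModule f w l -> ccont (dq f w l) w.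
Proof.
  intros Hf eps Heps. destruct (C_deriv_eps f w l Hf (eps / 2)) as [d [Hd K]]; [lra|].
  exists d. split; auto. intros y Hy. unfold dq.
  destruct excluded_middle_informative as [E|E]; destruct excluded_middle_informative as [E2|E2]; try congruence.
  { replace (l - l)%C with (RtoC 0) by (apply injective_projections; simpl; ring). rewrite Cmod_R, Rabs_R0; auto. }
  assert (Hm : 0 < Cmod (y - w)). { apply Cmod_gt_0. intros E'. apply E. replace y with (y - w + w)%C by ring. rewrite E'. apply Cplus_0_l. }
  assert (Hn : (y - w)%C <> RtoC 0) by (apply Cmod_gt_0; auto).
  replace ((f y - f w) * Cinv (y - w) - l)%C with ((f y - f w - (y - w) * l) / (y - w))%C by (field; auto).
  rewrite Cmod_div by auto. specialize (K y Hy).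
  apply Rle_lt_trans with (eps / 2). 2: lra.
  unfold Rdiv. apply Rmult_le_reg_r with (Cmod (y - w)); auto. rewrite Rmult_assoc, Rinv_l by lra. lra.
Qed.

Definition holo_disk (f : C -> C) := forall z, Cmod z < 1 -> @ex_derive C_AbsRing C_NormedModule f z.

Definition Qk (r : R) (w : C) (t : R) : C := (circ r t * Cinv (circ r t - w))%C.

Lemma circ_neq r w t : Cmod w < r -> circ r t <> w.
Proof.
  intros H E. assert (Cmod (circ r t) = Cmod w) by (rewrite E; auto).
  rewrite Cmod_circ in H0. pose proof (Cmod_ge_0 w). rewrite Rabs_right in H0 by lra. lra.
Qed.

Lemma rcont_Qk r w t : Cmod w < r -> rcont (Qk r w) t.
Proof.
  intros H. unfold Qk. apply rcont_mult. apply rcont_circ.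
  apply (rcont_comp (fun y => Cinv (y - w)) (circ r)). apply rcont_circ.
  apply holo_ccont. eexists. apply is_derive_inv_shift. apply circ_neq; auto.
Qed.

Lemma rcont_holo_circ f r t : holo_disk f -> 0 <= r < 1 -> rcont (fun t => f (circ r t)) t.
Proof.
  intros Hf Hr. apply (rcont_comp f (circ r)). apply rcont_circ. apply holo_ccont. apply Hf.
  rewrite Cmod_circ, Rabs_right; lra.
Qed.

Lemma CRInt_ext (f g : R -> C) a b : (forall x, f x = g x) -> CRInt f a b = CRInt g a b.
Proof. intros H. apply (@RInt_ext C_R_CompleteNormedModule). intros; auto. Qed.

Theorem cauchy_Q f w r : holo_disk f -> 0 <= r < 1 -> Cmod w < r ->
  CRInt (fun t => (f (circ r t) * Qk r w t)%C) 0 (2 * PI) = (f w * CRInt (Qk r w) 0 (2 * PI))%C.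
Proof.
  intros Hf Hr Hw.
  assert (Hw1 : Cmod w < 1) by lra.
  destruct (Hf w Hw1) as [l Hl].
  set (g := dq f w l).
  assert (Hc : forall z, Cmod z < 1 -> ccont g z).
  { intros z Hz. destruct (excluded_middle_informative (z = w)) as [->|E].
    - apply dq_ccont_w; auto.
    - apply holo_ccont. apply dq_deriv; auto. }
  assert (Hr' : forall a b c d, (forall z, inrect a b c d z -> Cmod z < 1) -> Irect g a b c d = RtoC 0).
  { intros a b c d Hin. apply (goursat_exc g a b c d w).
    - intros z Hz. apply Hc; auto.
    - intros z Hz Hzw. apply dq_deriv; auto. }
  assert (Z := circle_zero g r Hc Hr' Hr).
  assert (Ext : forall t, (g (circ r t) * (Ci * circ r t))%C =
                         (Ci * (f (circ r t) * Qk r w t - f w * Qk r w t))%C).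
  { intros t. unfold g, dq. destruct excluded_middle_informative as [E|E].
    - exfalso. apply (circ_neq r w t); auto.
    - unfold Qk. ring. }
  rewrite (CRInt_ext _ _ _ _ Ext) in Z.
  assert (I1 : CexRInt (fun t => (f (circ r t) * Qk r w t)%C) 0 (2 * PI)).
  { apply rcont_ex_RInt. intros t _. apply rcont_mult. apply rcont_holo_circ; auto. apply rcont_Qk; auto. }
  assert (I2 : CexRInt (fun t => (f w * Qk r w t)%C) 0 (2 * PI)).
  { apply rcont_ex_RInt. intros t _. apply rcont_mult. apply rcont_const. apply rcont_Qk; auto. }
  rewrite RInt_Cmult in Z. 2: { apply (@ex_RInt_minus C_R_CompleteNormedModule); auto. }
  rewrite (@RInt_minus C_R_CompleteNormedModule) in Z by auto.
  rewrite RInt_Cmult in Z. 2: { apply rcont_ex_RInt. intros t _. apply rcont_Qk; auto. }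
  change minus with Cminus in Z.
  set (A := CRInt (fun t => (f (circ r t) * Qk r w t)%C) 0 (2 * PI)) in *.
  set (B := CRInt (Qk r w) 0 (2 * PI)) in *.
  replace A with (f w * B + (- Ci) * (Ci * (A - f w * B)))%C by (apply injective_projections; simpl; ring).
  rewrite Z. apply injective_projections; simpl; ring.
Qed.

Lemma Cpow_mul (a b : C) n : Cpow (a * b) n = (Cpow a n * Cpow b n)%C.
Proof. induction n; simpl. apply injective_projections; simpl; ring. rewrite IHn. ring. Qed.

Lemma geom_id (q Q : C) N : (Q - q * Q)%C = RtoC 1 -> Q = (psum (fun n => Cpow q n) N + Cpow q N * Q)%C.
Proof.
  intros H. induction N.
  - simpl. apply injective_projections; simpl; ring.
  - simpl. rewrite IHN at 1. replace (Cpow q N * Q)%C with (Cpow q N * (Q - q * Q) + Cpow q N * (q * Q))%C at 1 by ring.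
    rewrite H. ring.
Qed.

Lemma psum_scal (c : C) (a : nat -> C) N : (c * psum a N)%C = psum (fun n => c * a n)%C N.
Proof. induction N; simpl. apply injective_projections; simpl; ring. rewrite <- IHN. ring. Qed.

Lemma rcont_psum (F : nat -> R -> C) (c : nat -> C) N t : (forall n, rcont (F n) t) ->
  rcont (fun s => psum (fun n => c n * F n s)%C N) t.
Proof.
  intros H. induction N; simpl. apply rcont_const. apply rcont_plus; auto. apply rcont_mult. apply rcont_const. auto.
Qed.

Lemma CRInt_psum (F : nat -> R -> C) (c : nat -> C) a b N : (forall n, CexRInt (F n) a b) ->
  CexRInt (fun t => psum (fun n => c n * F n t)%C N) a b /\
  CRInt (fun t => psum (fun n => c n * F n t)%C N) a b = psum (fun n => c n * CRInt (F n) a b)%C N.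
Proof.
  intros H. induction N; simpl.
  - split. apply (@ex_RInt_const C_R_CompleteNormedModule).
    rewrite (@RInt_const C_R_CompleteNormedModule). rewrite scal_CR. apply injective_projections; simpl; ring.
  - destruct IHN as [E1 E2]. split.
    + apply (@ex_RInt_plus C_R_CompleteNormedModule); auto. apply ex_RInt_Cmult; auto.
    + rewrite (@RInt_plus C_R_CompleteNormedModule (fun t => psum (fun n => c n * F n t)%C N) (fun t => (c N * F N t)%C)); auto.
      change plus with Cplus. rewrite E2. rewrite RInt_Cmult; auto. apply ex_RInt_Cmult; auto.
Qed.

Lemma Qk_identity r w t : 0 < r -> Cmod w < r ->
  (Qk r w t - (w * (RtoC (/ r) * En 1 t)) * Qk r w t)%C = RtoC 1.
Proof.
  intros Hr Hw. rewrite <- circ_inv by lra. unfold Qk.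
  assert (H1 : circ r t <> RtoC 0).
  { intros E. assert (Cmod (circ r t) = 0) by (rewrite E; rewrite Cmod_R; apply Rabs_R0). rewrite Cmod_circ in H. apply Rabs_eq_0 in H. lra. }
  assert (H2 : (circ r t - w)%C <> RtoC 0).
  { intros E. apply (circ_neq r w t Hw). replace (circ r t) with (circ r t - w + w)%C by ring. rewrite E. apply Cplus_0_l. }
  field. auto.
Qed.

Lemma Cmod_Qk r w t : 0 < r -> Cmod w < r -> Cmod (Qk r w t) <= r / (r - Cmod w).
Proof.
  intros Hr Hw. unfold Qk.
  assert (H2 : (circ r t - w)%C <> RtoC 0).
  { intros E. apply (circ_neq r w t Hw). replace (circ r t) with (circ r t - w + w)%C by ring. rewrite E. apply Cplus_0_l. }
  rewrite Cmod_mult, Cmod_inv by auto. rewrite Cmod_circ, Rabs_right by lra.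
  assert (T := Cmod_triangle (circ r t - w) w). replace (circ r t - w + w)%C with (circ r t) in T by ring.
  rewrite Cmod_circ, Rabs_right in T by lra.
  unfold Rdiv. apply Rmult_le_compat_l. lra. apply Rinv_le_contravar; lra.
Qed.

Lemma cont_cosn n t : continuity_pt (fun s => cos (INR n * s)) t.
Proof. apply continuity_pt_filterlim. apply (ex_derive_continuous (fun s => cos (INR n * s))). auto_derive; auto. Qed.
Lemma cont_sinn n t : continuity_pt (fun s => - sin (INR n * s)) t.
Proof. apply continuity_pt_filterlim. apply (ex_derive_continuous (fun s => - sin (INR n * s))). auto_derive; auto. Qed.
Lemma rcont_En n t : rcont (En n) t.
Proof. unfold En. apply rcont_pair. apply cont_cosn. apply cont_sinn. Qed.

Theorem expansion (p : R -> C) r w N M : 0 < r -> Cmod w < r -> (forall t, rcont p t) ->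
  (forall t, 0 <= t <= 2 * PI -> Cmod (p t) <= M) ->
  Cmod (CRInt (fun t => (p t * Qk r w t)%C) 0 (2 * PI) -
        psum (fun n => Cpow w n * Cpow (RtoC (/ r)) n * CRInt (fun t => (p t * En n t)%C) 0 (2 * PI))%C N)
  <= 2 * PI * (M * ((Cmod w / r) ^ N * (r / (r - Cmod w)))).
Proof.
  intros Hr Hw Hp HM.
  set (q := fun t => (w * (RtoC (/ r) * En 1 t))%C).
  set (rem := fun t => (p t * (Cpow (q t) N * Qk r w t))%C).
  assert (Pt : forall t, (p t * Qk r w t)%C =
     (psum (fun n => (Cpow w n * Cpow (RtoC (/ r)) n) * (p t * En n t))%C N + rem t)%C).
  { intros t. rewrite (geom_id (q t) (Qk r w t) N) at 1 by (apply Qk_identity; auto).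
    unfold rem. rewrite Cmult_plus_distr_l. f_equal. rewrite psum_scal.
    clear. induction N; simpl; auto. rewrite IHN. f_equal. unfold q. rewrite !Cpow_mul, En_pow. ring. }
  assert (rcE : forall n t, rcont (fun s => (p s * En n s)%C) t).
  { intros n t. apply rcont_mult; auto. apply rcont_En. }
  assert (IE : forall n, CexRInt (fun s => (p s * En n s)%C) 0 (2 * PI)).
  { intros n. apply rcont_ex_RInt. intros; auto. }
  destruct (CRInt_psum (fun n s => (p s * En n s)%C) (fun n => (Cpow w n * Cpow (RtoC (/ r)) n)%C) 0 (2 * PI) N IE) as [Ps1 Ps2].
  assert (Irem : CexRInt rem 0 (2 * PI)).
  { apply rcont_ex_RInt. intros t _. unfold rem. apply rcont_mult; auto.
    apply rcont_mult. 2: apply rcont_Qk; auto.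
    clear -Hr. induction N; simpl. apply rcont_const. apply rcont_mult; auto.
    unfold q. apply rcont_mult. apply rcont_const. apply rcont_mult. apply rcont_const. apply rcont_En. }
  rewrite (CRInt_ext _ _ _ _ Pt).
  rewrite (@RInt_plus C_R_CompleteNormedModule (fun t => psum (fun n => (Cpow w n * Cpow (RtoC (/ r)) n) * (p t * En n t))%C N) rem) by auto.
  change plus with Cplus. rewrite Ps2.
  assert (EQ : forall A B : C, (A + B - A)%C = B) by (intros; ring). rewrite EQ.
  replace (2 * PI) with (2 * PI - 0) at 2 by ring.
  apply edge_bound. pose proof PI_RGT_0; lra. auto.
  intros t Ht. specialize (HM t ltac:(lra)). unfold rem. rewrite !Cmod_mult, Cmod_pow.
  assert (Cq : Cmod (q t) = Cmod w / r).
  { unfold q. rewrite !Cmod_mult, Cmod_En, Cmod_R, Rabs_right. field. lra. apply Rle_ge, Rlt_le, Rinv_0_lt_compat; lra. }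
  rewrite Cq. pose proof (Cmod_Qk r w t Hr Hw). pose proof (Cmod_ge_0 (p t)).
  assert (0 <= (Cmod w / r) ^ N) by (apply pow_le; apply Rdiv_le_0_compat; [apply Cmod_ge_0|lra]).
  apply Rmult_le_compat; auto. apply Rmult_le_pos; auto. apply Cmod_ge_0.
  apply Rmult_le_compat_l; auto.
Qed.

Lemma geom_small (rho : R) (K x : R) : 0 <= rho < 1 -> 0 <= K ->
  (forall N, x <= K * rho ^ N) -> x <= 0.
Proof.
  intros Hr HK H. destruct (Rle_lt_dec x 0); auto. exfalso.
  assert (Hy : 0 < x / (K + 1)) by (apply Rdiv_lt_0_compat; lra).
  destruct (pow_lt_1_zero rho ltac:(rewrite Rabs_right; lra) _ Hy) as [N HN].
  specialize (HN N (Nat.le_refl N)). rewrite Rabs_right in HN by (apply Rle_ge, pow_le; lra).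
  specialize (H N). assert (K * rho ^ N <= K * (x / (K + 1))).
  { apply Rmult_le_compat_l; lra. }
  assert (K * (x / (K + 1)) < x). { unfold Rdiv. apply Rmult_lt_reg_r with (K + 1). lra.
    rewrite Rmult_assoc, Rmult_assoc, Rinv_l, Rmult_1_r by lra. nra. }
  lra.
Qed.

Lemma int_Qk r w : 0 < r -> Cmod w < r -> CRInt (Qk r w) 0 (2 * PI) = RtoC (2 * PI).
Proof.
  intros Hr Hw. set (rho := Cmod w / r).
  assert (Hrho : 0 <= rho < 1). { unfold rho. split. apply Rdiv_le_0_compat; [apply Cmod_ge_0|lra].
    apply Rmult_lt_reg_r with r; auto. unfold Rdiv. rewrite Rmult_assoc, Rinv_l, Rmult_1_r, Rmult_1_l by lra. auto. }
  assert (Hps : forall N, psum (fun n => Cpow w n * Cpow (RtoC (/ r)) n * CRInt (fun t => (RtoC 1 * En n t)%C) 0 (2 * PI))%C (S N) = RtoC (2 * PI)).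
  { induction N.
    - simpl. rewrite (CRInt_ext _ (En 0)) by (intros; ring). rewrite int_En. simpl.
      apply injective_projections; simpl; ring.
    - simpl in IHN |- *. rewrite IHN. rewrite (CRInt_ext _ (En (S N))) by (intros; ring). rewrite int_En. simpl.
      apply injective_projections; simpl; ring. }
  assert (K : forall N, Cmod (CRInt (Qk r w) 0 (2 * PI) - RtoC (2 * PI)) <= (2 * PI * rho * (r / (r - Cmod w))) * rho ^ N).
  { intros N. pose proof (expansion (fun _ => RtoC 1) r w (S N) 1 Hr Hw (fun t => rcont_const _ t)) as E.
    rewrite Hps in E. rewrite (CRInt_ext (fun t => (RtoC 1 * Qk r w t)%C) (Qk r w)) in E by (intros; ring).
    eapply Rle_trans. apply E. intros; rewrite Cmod_R, Rabs_R1; lra.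
    fold rho. simpl. right. ring. }
  assert (Kp : 0 <= 2 * PI * rho * (r / (r - Cmod w))).
  { pose proof PI_RGT_0. apply Rmult_le_pos. apply Rmult_le_pos; lra. apply Rdiv_le_0_compat; lra. }
  assert (K2 := geom_small rho _ _ Hrho Kp K).
  assert (K3 : Cmod (CRInt (Qk r w) 0 (2 * PI) - RtoC (2 * PI)) = 0) by (pose proof (Cmod_ge_0 (CRInt (Qk r w) 0 (2 * PI) - RtoC (2 * PI))); lra).
  apply Cmod_eq_0 in K3. replace (CRInt (Qk r w) 0 (2 * PI)) with (CRInt (Qk r w) 0 (2 * PI) - RtoC (2 * PI) + RtoC (2 * PI))%C by ring.
  rewrite K3. apply Cplus_0_l.
Qed.

Definition coef (f : C -> C) (r : R) (n : nat) : C :=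
  (RtoC (/ (2 * PI)) * Cpow (RtoC (/ r)) n * CRInt (fun t => (f (circ r t) * En n t)%C) 0 (2 * PI))%C.

Theorem cauchy_expansion f r w N M : holo_disk f -> 0 < r < 1 -> Cmod w < r ->
  (forall t, 0 <= t <= 2 * PI -> Cmod (f (circ r t)) <= M) ->
  Cmod (f w - psum (fun n => coef f r n * Cpow w n)%C N) <= M * ((Cmod w / r) ^ N * (r / (r - Cmod w))).
Proof.
  intros Hf Hr Hw HM.
  assert (E := expansion (fun t => f (circ r t)) r w N M ltac:(lra) Hw (fun t => rcont_holo_circ f r t Hf ltac:(lra)) HM).
  cbv beta in E. rewrite cauchy_Q in E by (auto; lra). rewrite int_Qk in E by (auto; lra).
  assert (P : (0 < 2 * PI)) by (pose proof PI_RGT_0; lra).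
  assert (EQ : (f w - psum (fun n => coef f r n * Cpow w n)%C N)%C =
     (RtoC (/ (2 * PI)) * (f w * RtoC (2 * PI) - psum (fun n => Cpow w n * Cpow (RtoC (/ r)) n * CRInt (fun t => (f (circ r t) * En n t)%C) 0 (2 * PI))%C N))%C).
  { assert (D : forall a b c : C, (a * (b - c))%C = (a * b - a * c)%C) by (intros; ring).
    rewrite D. rewrite psum_scal. f_equal.
    - rewrite Cmult_comm, <- Cmult_assoc, <- RtoC_mult, Rinv_r by lra. symmetry. apply Cmult_1_r.
    - clear. induction N; simpl; auto. rewrite IHN. f_equal. unfold coef. ring. }
  rewrite EQ, Cmod_mult, Cmod_R, Rabs_right by (apply Rle_ge, Rlt_le, Rinv_0_lt_compat; lra).
  apply Rmult_le_reg_l with (2 * PI); auto. rewrite <- Rmult_assoc, Rinv_r, Rmult_1_l by lra. exact E.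
Qed.

Definition hol (f : C -> C) (z : C) := @ex_derive C_AbsRing C_NormedModule f z.

Lemma hol_mult f g z : hol f z -> hol g z -> hol (fun y => (f y * g y)%C) z.
Proof.
  intros [a Ha] [b Hb]. eexists. apply deriv_AC.
  apply (@is_derive_mult C_AbsRing f g). apply deriv_CA; eauto. apply deriv_CA; eauto. intros; apply Cmult_comm.
Qed.
Lemma hol_plus f g z : hol f z -> hol g z -> hol (fun y => (f y + g y)%C) z.
Proof.
  intros [a Ha] [b Hb]. eexists. apply deriv_AC.
  apply (@is_derive_plus C_AbsRing (AbsRing_NormedModule C_AbsRing) f g). apply deriv_CA; eauto. apply deriv_CA; eauto.
Qed.
Lemma hol_minus f g z : hol f z -> hol g z -> hol (fun y => (f y - g y)%C) z.
Proof.
  intros [a Ha] [b Hb]. eexists. apply deriv_AC.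
  apply (@is_derive_minus C_AbsRing (AbsRing_NormedModule C_AbsRing) f g). apply deriv_CA; eauto. apply deriv_CA; eauto.
Qed.
Lemma hol_const (c : C) z : hol (fun _ => c) z.
Proof. eexists. apply deriv_AC. apply (@is_derive_const C_AbsRing (AbsRing_NormedModule C_AbsRing)). Qed.
Lemma hol_comp f g z : hol g z -> hol f (g z) -> hol (fun y => f (g y)) z.
Proof.
  intros [b Hb] [a Ha]. eexists. apply deriv_AC.
  apply (@is_derive_comp C_AbsRing (AbsRing_NormedModule C_AbsRing) f g). apply deriv_CA; eauto. apply deriv_CA; eauto.
Qed.
Lemma hol_pow f z n : hol f z -> hol (fun y => Cpow (f y) n) z.
Proof. intros H. induction n; simpl. apply hol_const. apply hol_mult; auto. Qed.
Lemma hol_psum (a : nat -> C) (F : nat -> C -> C) z N : (forall n, hol (F n) z) ->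
  hol (fun y => psum (fun n => a n * F n y)%C N) z.
Proof. intros H. induction N; simpl. apply hol_const. apply hol_plus; auto. apply hol_mult; auto. apply hol_const. Qed.

Lemma H2set_r0 f : (fun x => exists r : R, 0 <= r < 1 /\ x = sqrt (circle_mean2 f r)) (sqrt (circle_mean2 f 0)).
Proof. exists 0. split; [lra|auto]. Qed.

Lemma H2n_ge f r : in_H2 f -> 0 <= r < 1 -> sqrt (circle_mean2 f r) <= H2n f.
Proof.
  intros [_ Hfin] Hr. unfold H2n. unfold H2norm in *.
  destruct (Lub_Rbar_correct (fun x => exists r : R, 0 <= r < 1 /\ x = sqrt (circle_mean2 f r))) as [Hub _].
  specialize (Hub (sqrt (circle_mean2 f r)) (ex_intro _ r (conj Hr eq_refl))).
  unfold is_finite in Hfin. destruct (Lub_Rbar _); simpl in *; auto; discriminate.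
Qed.

Lemma H2n_nonneg f : 0 <= H2n f.
Proof.
  unfold H2n, H2norm.
  destruct (Lub_Rbar_correct (fun x => exists r : R, 0 <= r < 1 /\ x = sqrt (circle_mean2 f r))) as [Hub _].
  specialize (Hub _ (H2set_r0 f)).
  destruct (Lub_Rbar _); simpl in *; try lra. pose proof (sqrt_pos (circle_mean2 f 0)). lra.
Qed.

Lemma H2n_le f B : 0 <= B -> (forall r, 0 <= r < 1 -> sqrt (circle_mean2 f r) <= B) ->
  is_finite (H2norm f) /\ H2n f <= B.
Proof.
  intros HB H. unfold H2n, H2norm.
  destruct (Lub_Rbar_correct (fun x => exists r : R, 0 <= r < 1 /\ x = sqrt (circle_mean2 f r))) as [Hub Hlub].
  assert (L := Hlub (Finite B) ltac:(intros x [r [Hr ->]]; simpl; apply H; auto)).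
  specialize (Hub _ (H2set_r0 f)).
  destruct (Lub_Rbar _); simpl in *; try contradiction; split; auto; reflexivity.
Qed.

Lemma rcont_Cmod2 h t : rcont h t -> continuity_pt (fun s => Cmod (h s) ^ 2) t.
Proof.
  intros H. apply continuity_pt_filterlim.
  apply (continuous_comp (fun s => Cmod (h s)) (fun x => x ^ 2)).
  2: { apply (ex_derive_continuous (fun x => x ^ 2)). auto_derive; auto. }
  apply continuity_pt_filterlim. intros eps Heps. destruct (H eps Heps) as [d [Hd K]].
  exists d. split; auto. intros x [_ Hx]. simpl in Hx. unfold Rdist in Hx |- *.
  eapply Rle_lt_trans. 2: apply (K x Hx).
  assert (T1 := Cmod_triangle (h x - h t) (h t)). assert (T2 := Cmod_triangle (h t - h x) (h x)).
  replace (h x - h t + h t)%C with (h x) in T1 by ring. replace (h t - h x + h x)%C with (h t) in T2 by ring.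
  replace (h t - h x)%C with (- (h x - h t))%C in T2 by ring. rewrite Cmod_opp in T2.
  apply Rabs_le; split; lra.
Qed.

Lemma ex_RInt_Cmod2 (F : C -> C) r : 0 <= r < 1 -> (forall z, Cmod z < 1 -> ccont F z) ->
  ex_RInt (fun t => Cmod (F (circ r t)) ^ 2) 0 (2 * PI).
Proof.
  intros Hr HF. apply (@ex_RInt_continuous R_CompleteNormedModule). intros t _. apply continuity_pt_filterlim.
  apply rcont_Cmod2. apply rcont_comp. apply rcont_circ. apply HF. rewrite Cmod_circ, Rabs_right; lra.
Qed.

Lemma ccont_mult f g z : ccont f z -> ccont g z -> ccont (fun s => (f s * g s)%C) z.
Proof.
  intros H1 H2 eps Heps.
  set (A := Cmod (f z)). set (B := Cmod (g z)).
  assert (HA : 0 <= A) by apply Cmod_ge_0. assert (HB : 0 <= B) by apply Cmod_ge_0.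
  set (e := Rmin 1 (eps / (A + B + 1))).
  assert (He : 0 < e). { apply Rmin_pos. lra. apply Rdiv_lt_0_compat; lra. }
  assert (He1 : e <= 1) by apply Rmin_l.
  assert (He2 : e * (A + B + 1) <= eps).
  { unfold e. eapply Rle_trans. apply Rmult_le_compat_r. lra. apply Rmin_r.
    right. field. lra. }
  destruct (H1 e He) as [d1 [Hd1 K1]]. destruct (H2 e He) as [d2 [Hd2 K2]].
  exists (Rmin d1 d2). split. apply Rmin_pos; auto.
  intros s Hs.
  assert (X := K1 s (Rlt_le_trans _ _ _ Hs (Rmin_l _ _))).
  assert (Y := K2 s (Rlt_le_trans _ _ _ Hs (Rmin_r _ _))).
  replace (f s * g s - f z * g z)%C with ((f s - f z) * (g s - g z) + (f s - f z) * g z + f z * (g s - g z))%C by ring.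
  eapply Rle_lt_trans. apply Cmod_triangle. eapply Rle_lt_trans. apply Rplus_le_compat_r. apply Cmod_triangle.
  rewrite !Cmod_mult. fold A B.
  pose proof (Cmod_ge_0 (f s - f z)). pose proof (Cmod_ge_0 (g s - g z)).
  assert (P1 : Cmod (f s - f z) * Cmod (g s - g z) <= Cmod (f s - f z) * 1) by (apply Rmult_le_compat_l; lra).
  assert (Cmod (f s - f z) * B <= e * B) by (apply Rmult_le_compat_r; lra).
  assert (A * Cmod (g s - g z) <= A * e) by (apply Rmult_le_compat_l; lra).
  lra.
Qed.

Lemma cm2_circ f r : circle_mean2 f r = / (2 * PI) * RInt (fun t => Cmod (f (circ r t)) ^ 2) 0 (2 * PI).
Proof. reflexivity. Qed.

Lemma mult_bound (psi g : C -> C) B : in_H2 psi -> 0 <= B ->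
  (forall z, Cmod z < 1 -> ccont g z) -> (forall z, Cmod z < 1 -> Cmod (g z) <= B) ->
  is_finite (H2norm (fun z => (psi z * g z)%C)) /\ H2n (fun z => (psi z * g z)%C) <= B * H2n psi.
Proof.
  intros Hpsi HB Hgc Hgb. apply H2n_le. apply Rmult_le_pos; auto. apply H2n_nonneg.
  intros r Hr. apply Rle_trans with (B * sqrt (circle_mean2 psi r)).
  2: { apply Rmult_le_compat_l; auto. apply H2n_ge; auto. }
  rewrite <- (sqrt_Rsqr B) by auto. rewrite <- sqrt_mult_alt by (apply Rle_0_sqr).
  apply sqrt_le_1_alt. rewrite !cm2_circ.
  assert (Hpc : forall z, Cmod z < 1 -> ccont psi z) by (intros; apply holo_ccont; apply Hpsi; auto).
  assert (P : 0 < 2 * PI) by (pose proof PI_RGT_0; lra).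
  assert (Ip := ex_RInt_Cmod2 psi r Hr Hpc).
  assert (Ipg : ex_RInt (fun t => Cmod (psi (circ r t) * g (circ r t)) ^ 2) 0 (2 * PI)).
  { apply (ex_RInt_Cmod2 (fun z => (psi z * g z)%C) r Hr). intros z Hz. apply ccont_mult; auto. }
  assert (Sc : RInt (fun t => B² * (Cmod (psi (circ r t)) ^ 2)) 0 (2 * PI) = B² * RInt (fun t => Cmod (psi (circ r t)) ^ 2) 0 (2 * PI)).
  { apply (@RInt_scal R_CompleteNormedModule); auto. }
  replace (B² * (/ (2 * PI) * RInt (fun t => Cmod (psi (circ r t)) ^ 2) 0 (2 * PI))) with
    (/ (2 * PI) * RInt (fun t => B² * (Cmod (psi (circ r t)) ^ 2)) 0 (2 * PI)) by (rewrite Sc; ring).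
  apply Rmult_le_compat_l. apply Rlt_le, Rinv_0_lt_compat; auto.
  apply RInt_le. lra. auto. apply (@ex_RInt_scal R_CompleteNormedModule); auto.
  intros t _. rewrite Cmod_mult. unfold Rsqr.
  assert (Hz : Cmod (circ r t) < 1) by (rewrite Cmod_circ, Rabs_right; lra).
  specialize (Hgb _ Hz). pose proof (Cmod_ge_0 (g (circ r t))). pose proof (Cmod_ge_0 (psi (circ r t))).
  simpl. rewrite !Rmult_1_r.
  assert (Cmod (g (circ r t)) * Cmod (g (circ r t)) <= B * B) by (apply Rmult_le_compat; auto).
  assert (0 <= Cmod (psi (circ r t)) * Cmod (psi (circ r t))) by nra. nra.
Qed.

Lemma CS_ineq (u : R -> R) : ex_RInt u 0 (2 * PI) -> ex_RInt (fun t => u t ^ 2) 0 (2 * PI) ->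
  (/ (2 * PI) * RInt u 0 (2 * PI)) ^ 2 <= / (2 * PI) * RInt (fun t => u t ^ 2) 0 (2 * PI).
Proof.
  intros H1 H2. assert (P : 0 < 2 * PI) by (pose proof PI_RGT_0; lra).
  set (I1 := RInt u 0 (2 * PI)). set (I2 := RInt (fun t => u t ^ 2) 0 (2 * PI)).
  set (m := / (2 * PI) * I1).
  assert (J : is_RInt (fun t => (u t - m) ^ 2) 0 (2 * PI) (I2 + (-2 * m) * I1 + (2 * PI - 0) * (m * m))).
  { apply (is_RInt_ext (fun t => 1 * (1 * u t ^ 2 + (- 2 * m) * u t) + 1 * (m * m))). intros x0 _; simpl; ring.
    replace (I2 + (-2 * m) * I1 + (2 * PI - 0) * (m * m)) with (1 * (1 * I2 + (-2 * m) * I1) + 1 * ((2 * PI - 0) * (m * m))) by ring.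
    apply is_RInt_lin2. apply is_RInt_lin2. apply (RInt_correct _ _ _ H2). apply (RInt_correct _ _ _ H1).
    apply is_RInt_const_R. }
  assert (Pos : 0 <= I2 + (-2 * m) * I1 + (2 * PI - 0) * (m * m)).
  { rewrite <- (is_RInt_unique _ _ _ _ J). apply RInt_ge_0. lra. eexists; eauto. intros; apply pow2_ge_0. }
  assert (E : I1 = 2 * PI * m) by (unfold m; rewrite <- Rmult_assoc, Rinv_r, Rmult_1_l by lra; reflexivity).
  rewrite E in Pos. fold m.
  apply Rmult_le_reg_l with (2 * PI); auto. assert (X : forall x : R, 2 * PI * (/ (2 * PI) * x) = x) by (intros; field; lra). rewrite X. nra.
Qed.

Lemma coef_bound f r n : holo_disk f -> 0 < r < 1 -> Cmod (coef f r n) * r ^ n <= sqrt (circle_mean2 f r).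
Proof.
  intros Hf Hr. assert (P : 0 < 2 * PI) by (pose proof PI_RGT_0; lra).
  assert (Rc : forall t, rcont (fun t => f (circ r t)) t) by (intros; apply rcont_holo_circ; auto; lra).
  assert (Iu : ex_RInt (fun t => Cmod (f (circ r t))) 0 (2 * PI)).
  { apply (@ex_RInt_continuous R_CompleteNormedModule). intros t _. apply continuity_pt_filterlim.
    intros eps Heps. destruct (Rc t eps Heps) as [d [Hd K]]. exists d. split; auto.
    intros x [_ Hx]. simpl in Hx. unfold Rdist in *. eapply Rle_lt_trans. 2: apply (K x Hx).
    assert (T1 := Cmod_triangle (f (circ r x) - f (circ r t)) (f (circ r t))).
    assert (T2 := Cmod_triangle (f (circ r t) - f (circ r x)) (f (circ r x))).
    replace (f (circ r x) - f (circ r t) + f (circ r t))%C with (f (circ r x)) in T1 by ring.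
    replace (f (circ r t) - f (circ r x) + f (circ r x))%C with (f (circ r t)) in T2 by ring.
    replace (f (circ r t) - f (circ r x))%C with (- (f (circ r x) - f (circ r t)))%C in T2 by ring.
    rewrite Cmod_opp in T2. apply Rabs_le; split; lra. }
  assert (Iu2 : ex_RInt (fun t => Cmod (f (circ r t)) ^ 2) 0 (2 * PI)).
  { apply ex_RInt_Cmod2; auto. lra. intros; apply holo_ccont; auto. }
  assert (IJ : CexRInt (fun t => (f (circ r t) * En n t)%C) 0 (2 * PI)).
  { apply rcont_ex_RInt. intros. apply rcont_mult; auto. apply rcont_En. }
  assert (BJ : Cmod (CRInt (fun t => (f (circ r t) * En n t)%C) 0 (2 * PI)) <= RInt (fun t => Cmod (f (circ r t))) 0 (2 * PI)).
  { rewrite <- (RInt_ext (fun t => Cmod (f (circ r t) * En n t)%C)).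
    apply Cmod_RInt_le; auto. lra.
    apply (ex_RInt_ext (fun t => Cmod (f (circ r t)))); auto. intros; rewrite Cmod_mult, Cmod_En, Rmult_1_r; reflexivity.
    intros; rewrite Cmod_mult, Cmod_En, Rmult_1_r; reflexivity. }
  unfold coef. rewrite !Cmod_mult, Cmod_pow, !Cmod_R.
  rewrite (Rabs_right (/ (2 * PI))) by (apply Rle_ge, Rlt_le, Rinv_0_lt_compat; lra).
  rewrite (Rabs_right (/ r)) by (apply Rle_ge, Rlt_le, Rinv_0_lt_compat; lra).
  replace (/ (2 * PI) * (/ r) ^ n * Cmod (CRInt (fun t => (f (circ r t) * En n t)%C) 0 (2 * PI)) * r ^ n)
    with (/ (2 * PI) * Cmod (CRInt (fun t => (f (circ r t) * En n t)%C) 0 (2 * PI)))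
    by (rewrite <- Rinv_pow by lra; field; split; [apply pow_nonzero; lra| lra]).
  apply Rle_trans with (/ (2 * PI) * RInt (fun t => Cmod (f (circ r t))) 0 (2 * PI)).
  { apply Rmult_le_compat_l; auto. apply Rlt_le, Rinv_0_lt_compat; lra. }
  rewrite cm2_circ. rewrite <- (sqrt_pow2 (/ (2 * PI) * RInt (fun t => Cmod (f (circ r t))) 0 (2 * PI))).
  apply sqrt_le_1_alt. apply CS_ineq; auto.
  apply Rmult_le_pos. apply Rlt_le, Rinv_0_lt_compat; lra. apply RInt_ge_0; auto. lra. intros; apply Cmod_ge_0.
Qed.

Definition Lc (r : R) (n : nat) : (C -> C) -> C := fun f => coef f r n.

Lemma rcont_Cmod_pt h t : rcont h t -> continuity_pt (fun s => Cmod (h s)) t.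
Proof.
  intros Rc eps Heps. destruct (Rc eps Heps) as [d [Hd K]]. exists d. split; auto.
  intros x [_ Hx]. simpl in Hx. unfold Rdist in *. eapply Rle_lt_trans. 2: apply (K x Hx).
  assert (T1 := Cmod_triangle (h x - h t) (h t)).
  assert (T2 := Cmod_triangle (h t - h x) (h x)).
  replace (h x - h t + h t)%C with (h x) in T1 by ring.
  replace (h t - h x + h x)%C with (h t) in T2 by ring.
  replace (h t - h x)%C with (- (h x - h t))%C in T2 by ring.
  rewrite Cmod_opp in T2. apply Rabs_le; split; lra.
Qed.

Lemma psum_ext (a b : nat -> C) N : (forall k, a k = b k) -> psum a N = psum b N.
Proof. intros H. induction N; simpl; auto. rewrite IHN, H. auto. Qed.

Lemma coef_plus f g r n : holo_disk f -> holo_disk g -> 0 < r < 1 ->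
  coef (fun z => (f z + g z)%C) r n = (coef f r n + coef g r n)%C.
Proof.
  intros Hf Hg Hr. unfold coef.
  assert (I1 : CexRInt (fun t => (f (circ r t) * En n t)%C) 0 (2 * PI)).
  { apply rcont_ex_RInt. intros. apply rcont_mult. apply rcont_holo_circ; auto; lra. apply rcont_En. }
  assert (I2 : CexRInt (fun t => (g (circ r t) * En n t)%C) 0 (2 * PI)).
  { apply rcont_ex_RInt. intros. apply rcont_mult. apply rcont_holo_circ; auto; lra. apply rcont_En. }
  rewrite (CRInt_ext _ (fun t => (f (circ r t) * En n t + g (circ r t) * En n t)%C)) by (intros; ring).
  rewrite (@RInt_plus C_R_CompleteNormedModule (fun t => (f (circ r t) * En n t)%C) (fun t => (g (circ r t) * En n t)%C)) by auto.
  change plus with Cplus. ring.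
Qed.

Lemma coef_scal f (c : C) r n : holo_disk f -> 0 < r < 1 ->
  coef (fun z => (c * f z)%C) r n = (c * coef f r n)%C.
Proof.
  intros Hf Hr. unfold coef.
  assert (I1 : CexRInt (fun t => (f (circ r t) * En n t)%C) 0 (2 * PI)).
  { apply rcont_ex_RInt. intros. apply rcont_mult. apply rcont_holo_circ; auto; lra. apply rcont_En. }
  rewrite (CRInt_ext _ (fun t => (c * (f (circ r t) * En n t))%C)) by (intros; ring).
  rewrite RInt_Cmult by auto. ring.
Qed.

Lemma coef_H2 f r n : in_H2 f -> 0 < r < 1 -> Cmod (coef f r n) <= (/ r) ^ n * H2n f.
Proof.
  intros Hf Hr. assert (B := coef_bound f r n (proj1 Hf) Hr).
  assert (B2 := H2n_ge f r Hf ltac:(lra)).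
  assert (P : 0 < r ^ n) by (apply pow_lt; lra).
  apply Rmult_le_reg_r with (r ^ n); auto. rewrite Rmult_comm with (r1 := (/ r) ^ n), Rmult_assoc.
  rewrite <- Rpow_mult_distr, Rinv_l, pow1 by lra. lra.
Qed.

Lemma H2_functional_Lc r n : 0 < r < 1 -> H2_functional (Lc r n).
Proof.
  intros Hr. split; [|split].
  - intros f g Hf Hg. unfold Lc. apply coef_plus; auto. apply Hf. apply Hg.
  - intros c f Hf. unfold Lc. apply coef_scal; auto. apply Hf.
  - exists ((/ r) ^ n). intros f Hf. apply coef_H2; auto.
Qed.

Lemma in_H2_const (c : C) : in_H2 (fun _ => c) /\ H2n (fun _ => c) = Cmod c.
Proof.
  assert (P : 0 < 2 * PI) by (pose proof PI_RGT_0; lra).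
  assert (E : forall r, sqrt (circle_mean2 (fun _ => c) r) = Cmod c).
  { intros r. unfold circle_mean2. rewrite RInt_const. change (scal (2 * PI - 0) (Cmod c ^ 2)) with ((2 * PI - 0) * Cmod c ^ 2).
    replace (/ (2 * PI) * ((2 * PI - 0) * Cmod c ^ 2)) with (Cmod c ^ 2) by (field; lra).
    apply sqrt_pow2. apply Cmod_ge_0. }
  assert (H := H2n_le (fun _ => c) (Cmod c) (Cmod_ge_0 c) ltac:(intros; rewrite E; lra)).
  destruct H as [Hfin Hle].
  split. split. intros z _. apply hol_const. auto.
  assert (G := H2n_ge (fun _ => c) 0). rewrite E in G.
  assert (Cmod c <= H2n (fun _ => c)). { apply G. split. intros z _. apply hol_const. auto. lra. }
  lra.
Qed.

Lemma fnorm_Lc r n : 0 < r < 1 -> 0 <= real (fnorm (Lc r n)) <= (/ r) ^ n.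
Proof.
  intros Hr. unfold fnorm.
  destruct (Lub_Rbar_correct (fun x => exists f, in_H2 f /\ H2n f <= 1 /\ x = Cmod (Lc r n f))) as [Hub Hlub].
  assert (Pn : 0 <= (/ r) ^ n) by (apply pow_le; apply Rlt_le, Rinv_0_lt_compat; lra).
  assert (L := Hlub (Finite ((/ r) ^ n))).
  assert (L' : Rbar_le (Lub_Rbar (fun x => exists f, in_H2 f /\ H2n f <= 1 /\ x = Cmod (Lc r n f))) ((/ r) ^ n)).
  { apply L. intros x [f [Hf [H1 ->]]]. simpl. unfold Lc. eapply Rle_trans. apply coef_H2; auto.
    rewrite <- (Rmult_1_r ((/ r) ^ n)) at 2. apply Rmult_le_compat_l; auto. }
  destruct (in_H2_const (RtoC 0)) as [Z1 Z2].
  assert (Z3 : H2n (fun _ => RtoC 0) <= 1) by (rewrite Z2, Cmod_R, Rabs_R0; lra).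
  assert (U := Hub (Cmod (Lc r n (fun _ => RtoC 0))) (ex_intro _ (fun _ => RtoC 0) (conj Z1 (conj Z3 eq_refl)))).
  pose proof (Cmod_ge_0 (Lc r n (fun _ => RtoC 0))).
  destruct (Lub_Rbar _); simpl in *; try contradiction; split; lra.
Qed.

Lemma circle_max f r : holo_disk f -> 0 <= r < 1 ->
  exists M, 0 <= M /\ forall t, 0 <= t <= 2 * PI -> Cmod (f (circ r t)) <= M.
Proof.
  intros Hf Hr. assert (P : 0 < 2 * PI) by (pose proof PI_RGT_0; lra).
  destruct (continuity_ab_maj (fun t => Cmod (f (circ r t))) 0 (2 * PI)) as [Mx [HM _]]. lra.
  { intros c _. apply rcont_Cmod_pt. apply rcont_holo_circ; auto. }
  exists (Cmod (f (circ r Mx))). split. apply Cmod_ge_0. auto.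
Qed.

Lemma tail_bound f r0 s : holo_disk f -> 0 <= s -> s < r0 < 1 ->
  exists M, 0 <= M /\ forall N w, Cmod w <= s ->
    Cmod (f w - psum (fun n => coef f r0 n * Cpow w n)%C N) <= M * ((s / r0) ^ N * (r0 / (r0 - s))).
Proof.
  intros Hf Hs Hr. destruct (circle_max f r0 Hf ltac:(lra)) as [M [HM0 HM]].
  exists M. split; auto. intros N w Hw.
  eapply Rle_trans. apply cauchy_expansion; auto; lra.
  apply Rmult_le_compat_l; auto. pose proof (Cmod_ge_0 w).
  apply Rmult_le_compat.
  - apply pow_le. apply Rdiv_le_0_compat; lra.
  - apply Rdiv_le_0_compat; lra.
  - apply pow_incr. split. apply Rdiv_le_0_compat; lra. unfold Rdiv. apply Rmult_le_compat_r. apply Rlt_le, Rinv_0_lt_compat; lra. auto.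
  - unfold Rdiv. apply Rmult_le_compat_l. lra. apply Rinv_le_contravar; lra.
Qed.

Lemma psum0 (a : nat -> C) : psum a 0 = RtoC 0.
Proof. reflexivity. Qed.

Lemma f_bound f r0 s : holo_disk f -> 0 <= s -> s < r0 < 1 ->
  exists B, 0 <= B /\ forall w, Cmod w <= s -> Cmod (f w) <= B.
Proof.
  intros Hf Hs Hr. destruct (tail_bound f r0 s Hf Hs Hr) as [M [HM K]].
  exists (M * (r0 / (r0 - s))). split. apply Rmult_le_pos; auto. apply Rdiv_le_0_compat; lra.
  intros w Hw. specialize (K 0%nat w Hw). rewrite psum0 in K. simpl in K.
  replace (f w - RtoC 0)%C with (f w) in K by (apply injective_projections; simpl; ring). lra.
Qed.

Lemma pow_Cmod_le (z : C) s n : Cmod z <= s -> Cmod (Cpow z n) <= s ^ n.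
Proof. intros H. rewrite Cmod_pow. apply pow_incr. split; auto. apply Cmod_ge_0. Qed.

Theorem core psi phi s r0 : in_H2 psi -> holomorphic_on_disk phi ->
  (forall z, in_disk z -> in_disk (phi z)) -> (forall z, in_disk z -> Cmod (phi z) <= s) ->
  0 <= s -> s < r0 < 1 ->
  nuclear_rep (wcomp_op psi phi) (fun n => Lc r0 n) (fun n z => (psi z * Cpow (phi z) n)%C) /\
  Series (fun n => real (fnorm (Lc r0 n)) * H2n (fun z => (psi z * Cpow (phi z) n)%C)) <= H2n psi / (1 - s / r0).
Proof.
  intros Hpsi Hphi Hmap Hs Hs0 Hr.
  assert (Hr' : 0 < r0 < 1) by lra.
  set (q := s / r0).
  assert (Hq : 0 <= q < 1). { unfold q. split. apply Rdiv_le_0_compat; lra.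
    apply Rmult_lt_reg_r with r0. lra. unfold Rdiv. rewrite Rmult_assoc, Rinv_l, Rmult_1_r, Rmult_1_l by lra. lra. }
  assert (Hpsih : holo_disk psi) by apply Hpsi.
  assert (Y : forall n, in_H2 (fun z => (psi z * Cpow (phi z) n)%C) /\
                        H2n (fun z => (psi z * Cpow (phi z) n)%C) <= s ^ n * H2n psi).
  { intros n. destruct (mult_bound psi (fun z => Cpow (phi z) n) (s ^ n) Hpsi (pow_le _ _ Hs0)) as [F B].
    - intros z Hz. apply holo_ccont. apply hol_pow. apply Hphi. auto.
    - intros z Hz. apply pow_Cmod_le. apply Hs; auto.
    - split; auto. split; auto. intros z Hz. apply hol_mult. apply Hpsih; auto. apply hol_pow. apply Hphi; auto. }
  assert (Term : forall n, 0 <= real (fnorm (Lc r0 n)) * H2n (fun z => (psi z * Cpow (phi z) n)%C) <= H2n psi * q ^ n).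
  { intros n. destruct (fnorm_Lc r0 n Hr') as [F1 F2]. destruct (Y n) as [_ Y2].
    pose proof (H2n_nonneg (fun z => (psi z * Cpow (phi z) n)%C)). split. apply Rmult_le_pos; auto.
    apply Rle_trans with ((/ r0) ^ n * (s ^ n * H2n psi)). apply Rmult_le_compat; auto.
    unfold q, Rdiv. rewrite Rpow_mult_distr. right; ring. }
  assert (Geo : ex_series (fun n => H2n psi * q ^ n)).
  { apply (@ex_series_scal_l R_AbsRing R_NormedModule (H2n psi) (fun n => q ^ n)). apply ex_series_geom. rewrite Rabs_right; lra. }
  split.
  - split; [|split; [|split; [|split]]].
    + intros n. apply H2_functional_Lc; auto.
    + intros n. apply Y.
    + apply (@ex_series_le R_AbsRing R_CompleteNormedModule _ (fun n => H2n psi * q ^ n)); auto.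
      intros n. change (norm ?x) with (Rabs x). destruct (Term n). rewrite Rabs_right; lra.
    + intros f Hf. destruct (f_bound f r0 s (proj1 Hf) Hs0 Hr) as [B [HB KB]].
      destruct (mult_bound psi (fun z => f (phi z)) B Hpsi HB) as [F1 _].
      * intros z Hz. apply holo_ccont. apply hol_comp. apply Hphi; auto. apply (proj1 Hf). apply Hmap; auto.
      * intros z Hz. apply KB. apply Hs; auto.
      * split; auto. intros z Hz. apply hol_mult. apply Hpsih; auto. apply hol_comp. apply Hphi; auto. apply (proj1 Hf). apply Hmap; auto.
    + intros f Hf. destruct (tail_bound f r0 s (proj1 Hf) Hs0 Hr) as [M [HM KM]].
      set (K := H2n psi * (M * (r0 / (r0 - s)))).
      apply (is_lim_seq_le_le (fun _ => 0) _ (fun N => K * q ^ N)).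
      * intros N. split. apply H2n_nonneg.
        set (gN := fun z => (f (phi z) - psum (fun k => coef f r0 k * Cpow (phi z) k)%C N)%C).
        assert (EQ : (fun z => Cminus (wcomp_op psi phi f z) (psum (fun k => Cmult (Lc r0 k f) ((fun n z => (psi z * Cpow (phi z) n)%C) k z)) N))
                     = (fun z => (psi z * gN z)%C)).
        { apply functional_extensionality. intros z. unfold wcomp_op, gN, Lc.
          rewrite (psum_ext _ (fun k => psi z * (coef f r0 k * Cpow (phi z) k))%C) by (intros; ring).
          rewrite <- psum_scal. ring. }
        rewrite EQ.
        destruct (mult_bound psi gN (M * (q ^ N * (r0 / (r0 - s)))) Hpsi) as [_ G].
        { apply Rmult_le_pos; auto. apply Rmult_le_pos. apply pow_le; lra. apply Rdiv_le_0_compat; lra. }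
        { intros z Hz. apply holo_ccont. unfold gN. apply hol_minus. apply hol_comp. apply Hphi; auto.
          apply (proj1 Hf). apply Hmap; auto. apply hol_psum. intros k. apply hol_pow. apply Hphi; auto. }
        { intros z Hz. unfold gN. apply KM. apply Hs; auto. }
        eapply Rle_trans. apply G. unfold K. right. ring.
      * apply is_lim_seq_const.
      * replace (Finite 0) with (Rbar_mult K 0) by (simpl; f_equal; ring).
        apply is_lim_seq_scal_l. apply is_lim_seq_geom. rewrite Rabs_right; lra.
  - apply Rle_trans with (Series (fun n => H2n psi * q ^ n)).
    + apply Series_le; auto.
    + rewrite Series_scal_l. rewrite (is_series_unique (pow q) _ (is_series_geom q ltac:(rewrite Rabs_right; lra))).
      right. reflexivity.
Qed.

Lemma limit_arg H s x : 0 <= s < 1 -> (forall r, s < r < 1 -> x <= H / (1 - s / r)) -> x <= H / (1 - s).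
Proof.
  intros Hs Hx.
  assert (C1 : continuity_pt (fun r => H / (1 - s / r)) 1).
  { apply continuity_pt_filterlim. apply (ex_derive_continuous (fun r => H / (1 - s / r))).
    auto_derive. split. lra. split; auto. replace (1 - s / 1) with (1 - s) by field. lra. }
  apply Rnot_lt_le. intros Hlt. set (eps := x - H / (1 - s)).
  assert (He : 0 < eps) by (unfold eps; lra).
  destruct (C1 eps He) as [d [Hd K]].
  set (r := 1 - Rmin (d / 2) ((1 - s) / 2)).
  assert (Hm1 : 0 < Rmin (d / 2) ((1 - s) / 2)) by (apply Rmin_pos; lra).
  assert (Hm2 : Rmin (d / 2) ((1 - s) / 2) <= d / 2) by apply Rmin_l.
  assert (Hm3 : Rmin (d / 2) ((1 - s) / 2) <= (1 - s) / 2) by apply Rmin_r.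
  assert (Hr : s < r < 1) by (unfold r; lra).
  specialize (Hx r Hr).
  assert (Kr : Rabs (H / (1 - s / r) - H / (1 - s / 1)) < eps).
  { apply (K r). split. split. exact I. unfold r; lra. simpl. unfold Rdist. rewrite Rabs_left; unfold r; lra. }
  replace (1 - s / 1) with (1 - s) in Kr by field.
  apply Rabs_def2 in Kr. unfold eps in Kr. lra.
Qed.

Lemma sup_disk_fin phi : Rbar_lt (sup_disk phi) 1 ->
  exists s, sup_disk phi = Finite s /\ 0 <= s < 1 /\ forall z, in_disk z -> Cmod (phi z) <= s.
Proof.
  intros H. unfold sup_disk in *.
  destruct (Lub_Rbar_correct (fun x => exists z : C, in_disk z /\ x = Cmod (phi z))) as [Hub _].
  assert (D0 : in_disk (RtoC 0)) by (unfold in_disk; rewrite Cmod_R, Rabs_R0; lra).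
  assert (H0 := Hub (Cmod (phi (RtoC 0))) (ex_intro _ (RtoC 0) (conj D0 eq_refl))).
  pose proof (Cmod_ge_0 (phi (RtoC 0))).
  destruct (Lub_Rbar _) as [s| |] eqn:E; simpl in *; try contradiction.
  exists s. split; auto. split. lra. intros z Hz. apply (Hub (Cmod (phi z))). exists z; auto.
Qed.

Theorem mainTheorem8 (psi phi : C -> C) :
  in_H2 psi ->
  holomorphic_on_disk phi ->
  (forall z : C, in_disk z -> in_disk (phi z)) ->
  Rbar_lt (sup_disk phi) 1 ->
  nuclear (wcomp_op psi phi) /\ nuclear (comp_op phi) /\
  Rbar_le (nuclear_norm (wcomp_op psi phi))
          (Finite (H2n psi / (1 - real (sup_disk phi)))).
Proof.
  intros Hpsi Hphi Hmap Hsup.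
  destruct (sup_disk_fin phi Hsup) as [s [Es [Hs Hbs]]]. rewrite Es. simpl.
  assert (Hr0 : s < (1 + s) / 2 < 1) by lra.
  split; [|split].
  - destruct (core psi phi s ((1 + s) / 2) Hpsi Hphi Hmap Hbs (proj1 Hs) Hr0) as [R _].
    eexists; eexists; eauto.
  - assert (E : comp_op phi = wcomp_op (fun _ => RtoC 1) phi).
    { apply functional_extensionality; intros f. apply functional_extensionality; intros z.
      unfold comp_op, wcomp_op. symmetry. apply Cmult_1_l. }
    rewrite E. destruct (in_H2_const (RtoC 1)) as [H1 _].
    destruct (core (fun _ => RtoC 1) phi s ((1 + s) / 2) H1 Hphi Hmap Hbs (proj1 Hs) Hr0) as [R _].
    eexists; eexists; eauto.
  - unfold nuclear_norm.
    destruct (Glb_Rbar_correct (fun x => exists L y, nuclear_rep (wcomp_op psi phi) L y /\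
                       x = Series (fun n => real (fnorm (L n)) * H2n (y n)))) as [Hlb _].
    assert (B : forall r, s < r < 1 -> Rbar_le (Glb_Rbar (fun x => exists L y, nuclear_rep (wcomp_op psi phi) L y /\
                       x = Series (fun n => real (fnorm (L n)) * H2n (y n)))) (H2n psi / (1 - s / r))).
    { intros r Hr. destruct (core psi phi s r Hpsi Hphi Hmap Hbs (proj1 Hs) Hr) as [R S].
      unfold is_lb_Rbar in Hlb.
      eapply Rbar_le_trans.
      { apply (Hlb (Series (fun n => real (fnorm (Lc r n)) * H2n (fun z => (psi z * Cpow (phi z) n)%C)))).
        exists (fun n => Lc r n). eexists. split. exact R. reflexivity. }
      simpl. exact S. }
    destruct (Glb_Rbar _) as [x| |]; simpl in *; auto.
    + apply limit_arg. exact Hs. intros r Hr. specialize (B r Hr). simpl in B. exact B.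
    + apply (B ((1 + s) / 2) Hr0).
Qed.
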